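(* Each non-empty stunted sawtooth bone $B^{\rm saw}_\pm(o)$ of period $p\ge2$ is a simple arc with both endpoints on a common edge of the triangle $\overline T$, and it is made up of three line segments which are alternately horizontal and vertical (in the coordinates $(w_1,w_2)$). Any pair $B^{\rm saw}_-(o)$ and $B^{\rm saw}_+(o')$ of such bones intersect transversally in either $0$, $2$, or $4$ points. Dual bones $B^{\rm saw}_-(o)$ and $B^{\rm saw}_+(o)$ (same order type) always intersect in exactly two points.
   Context: $\overline T=\{(w_1,w_2)\in\mathbb R^2: 1\ge w_1\ge w_2\ge0\}$, whose edges are $\{w_1=1\}$, $\{w_2=0\}$, $\{w_1=w_2\}$. For $\mathbf w\in\overline T$, the stunted sawtooth map $S_{\mathbf w}:[0,1]\to[0,1]$ is $S_{\mathbf w}(x)=\min(3x,w_1)$ on $[0,1/3]$, $\min(w_1,\max(w_2,2-3x))$ on $[1/3,2/3]$, $\max(3x-2,w_2)$ on $[2/3,1]$. A periodic orbit $x_1<\dots<x_p$ of $g$ has order type $o$ (cyclic permutation of $\{1,\dots,p\}$) if $g(x_i)=x_{o(i)}$. $B^{\rm saw}_-(o)$ (resp. $B^{\rm saw}_+(o)$) is the set of $\mathbf w\in\overline T$ such that $1/3$ (resp. $2/3$) is periodic under $S_{\mathbf w}$ with orbit of order type $o$. *)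

(* Defs.v *)
From Stdlib Require Import Reals Lra Lia List.
Open Scope R_scope.

Definition inT (w : R * R) : Prop :=
  1 >= fst w /\ fst w >= snd w /\ snd w >= 0.

Definition saw (w1 w2 : R) (x : R) : R :=
  if Rle_dec x (1/3) then Rmin (3 * x) w1
  else if Rle_dec x (2/3) then Rmin w1 (Rmax w2 (2 - 3 * x))
  else Rmax (3 * x - 2) w2.

(* o (0-based: indices 0..p-1) is a cyclic permutation of {0,...,p-1}. *)
Definition is_cyclic_perm (p : nat) (o : nat -> nat) : Prop :=
  (forall i, (i < p)%nat -> (o i < p)%nat) /\
  (forall i j, (i < p)%nat -> (j < p)%nat -> o i = o j -> i = j) /\
  (forall i, (i < p)%nat -> exists k, Nat.iter k o 0%nat = i).

Definition periodic_order_type (g : R -> R) (c : R) (p : nat) (o : nat -> nat) : Prop :=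
  exists x : nat -> R,
    (forall i j, (i < j)%nat -> (j < p)%nat -> x i < x j) /\
    (forall k, exists i, (i < p)%nat /\ Nat.iter k g c = x i) /\
    (forall i, (i < p)%nat -> exists k, Nat.iter k g c = x i) /\
    (forall i, (i < p)%nat -> g (x i) = x (o i)).

Inductive sign := Minus | Plus.

Definition crit (s : sign) : R := match s with Minus => 1/3 | Plus => 2/3 end.

Definition bone (s : sign) (p : nat) (o : nat -> nat) (w : R * R) : Prop :=
  inT w /\ periodic_order_type (saw (fst w) (snd w)) (crit s) p o.

Definition seg (P Q z : R * R) : Prop :=
  exists t, 0 <= t <= 1 /\
    z = (fst P + t * (fst Q - fst P), snd P + t * (snd Q - snd P)).

Definition open_seg (P Q z : R * R) : Prop :=
  exists t, 0 < t < 1 /\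
    z = (fst P + t * (fst Q - fst P), snd P + t * (snd Q - snd P)).

Definition horiz (P Q : R * R) : Prop := snd P = snd Q.
Definition vert (P Q : R * R) : Prop := fst P = fst Q.

Definition hv_path (P : nat -> R * R) : Prop :=
  (forall i, (i < 3)%nat -> P i <> P (S i)) /\
  ((horiz (P 0%nat) (P 1%nat) /\ vert (P 1%nat) (P 2%nat) /\ horiz (P 2%nat) (P 3%nat)) \/
   (vert (P 0%nat) (P 1%nat) /\ horiz (P 1%nat) (P 2%nat) /\ vert (P 2%nat) (P 3%nat))).

Definition on_path (P : nat -> R * R) (z : R * R) : Prop :=
  exists i, (i < 3)%nat /\ seg (P i) (P (S i)) z.

Inductive edge := E_w1_eq_1 | E_w2_eq_0 | E_diag.

Definition on_edge (e : edge) (z : R * R) : Prop :=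
  match e with
  | E_w1_eq_1 => fst z = 1 /\ 0 <= snd z <= 1
  | E_w2_eq_0 => snd z = 0 /\ 0 <= fst z <= 1
  | E_diag => fst z = snd z /\ 0 <= fst z <= 1
  end.

Definition simple_arc (B : R * R -> Prop) (a b : R * R) : Prop :=
  exists g1 g2 : R -> R,
    (forall t, 0 <= t <= 1 -> continuity_pt g1 t /\ continuity_pt g2 t) /\
    (forall s t, 0 <= s <= 1 -> 0 <= t <= 1 ->
        (g1 s, g2 s) = (g1 t, g2 t) -> s = t) /\
    (forall z, B z <-> exists t, 0 <= t <= 1 /\ z = (g1 t, g2 t)) /\
    (g1 0, g2 0) = a /\ (g1 1, g2 1) = b.

Definition transversal_crossing (P Q : nat -> R * R) (q : R * R) : Prop :=
  exists i j, (i < 3)%nat /\ (j < 3)%nat /\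
    open_seg (P i) (P (S i)) q /\ open_seg (Q j) (Q (S j)) q /\
    (horiz (P i) (P (S i)) <-> vert (Q j) (Q (S j))).

Definition bone_shape (B : R * R -> Prop) (P : nat -> R * R) : Prop :=
  hv_path P /\ (forall z, B z <-> on_path P z).

Definition meet_transversally_in (B1 B2 : R * R -> Prop) (P Q : nat -> R * R)
    (n : nat) : Prop :=
  exists l : list (R * R), NoDup l /\ length l = n /\
    (forall q, In q l <-> (B1 q /\ B2 q)) /\
    (forall q, In q l -> transversal_crossing P Q q).

(* Main.v *)
Require Import Defs.
From Stdlib Require Import Reals Lra Lia List Classical ZArith.
Open Scope R_scope.

Open Scope R_scope.

Ltac sawt := unfold saw, Rmin, Rmax in *;
  repeat match goal with
  | |- context [Rle_dec ?a ?b] => destruct (Rle_dec a b)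
  | H: context [Rle_dec ?a ?b] |- _ => destruct (Rle_dec a b)
  end; lra.

Definition Tb (e : nat) (x : R) : R :=
  match e with 1%nat => 3*x | 2%nat => 2 - 3*x | _ => 3*x - 2 end.
Definition clap (e : nat) (x : R) : Prop :=
  match e with 1%nat => 0 <= x <= 1/3 | 2%nat => 1/3 <= x <= 2/3 | _ => 2/3 <= x <= 1 end.

Lemma Tb_inj e x y : Tb e x = Tb e y -> x = y.
Proof. destruct e as [|[|[|]]]; simpl; lra. Qed.

Lemma Tb_clap e x : 0 <= Tb e x <= 1 -> clap e x.
Proof. destruct e as [|[|[|]]]; simpl; lra. Qed.

Lemma clap_01 e x : clap e x -> 0 <= x <= 1.
Proof. destruct e as [|[|[|]]]; simpl; lra. Qed.

Lemma clap_agree e e' x : clap e x -> clap e' x -> Tb e x = Tb e' x.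
Proof. destruct e as [|[|[|]]]; destruct e' as [|[|[|]]]; simpl; lra. Qed.

Definition affine (f : R -> R) := exists a d, forall t, f t = a + d * t.

Lemma Tb_affine e f : affine f -> affine (fun t => Tb e (f t)).
Proof.
  intros [a [d H]].
  destruct e as [|[|[|]]]; simpl.
  - exists (3*a-2), (3*d); intro t; rewrite H; ring.
  - exists (3*a), (3*d); intro t; rewrite H; ring.
  - exists (2-3*a), (-3*d); intro t; rewrite H; ring.
  - exists (3*a-2), (3*d); intro t; rewrite H; ring.
Qed.

Lemma Tb_affine_nz e a d : d <> 0 -> exists a' d', d' <> 0 /\ forall t, Tb e (a + d*t) = a' + d' * t.
Proof.
  intros Hd.
  destruct e as [|[|[|]]]; simpl.
  - exists (3*a-2), (3*d); split; [intro; apply Hd; lra| intro t; ring].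
  - exists (3*a), (3*d); split; [intro; apply Hd; lra| intro t; ring].
  - exists (2-3*a), (-3*d); split; [intro; apply Hd; lra| intro t; ring].
  - exists (3*a-2), (3*d); split; [intro; apply Hd; lra| intro t; ring].
Qed.

Lemma affine_conv f t0 s l : affine f -> f (t0 + l * (s - t0)) = f t0 + l * (f s - f t0).
Proof. intros [a [d H]]. rewrite !H. ring. Qed.

Lemma affine_ivt f t0 s L : affine f -> f t0 < L -> L <= f s ->
  exists l, 0 <= l <= 1 /\ f (t0 + l * (s - t0)) = L.
Proof.
  intros Ha H1 H2.
  exists ((L - f t0) / (f s - f t0)).
  split.
  - split.
    + apply Rmult_le_pos; [lra|]. left; apply Rinv_0_lt_compat; lra.
    + apply (Rmult_le_reg_r (f s - f t0)); [lra|].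
      unfold Rdiv. rewrite Rmult_assoc, Rinv_l by lra. lra.
  - rewrite affine_conv by exact Ha. field. lra.
Qed.

Lemma affine_ivt' f t0 s L : affine f -> L < f t0 -> f s <= L ->
  exists l, 0 <= l <= 1 /\ f (t0 + l * (s - t0)) = L.
Proof.
  intros Ha H1 H2.
  destruct (affine_ivt (fun t => - f t) t0 s (-L)) as [l [Hl E]].
  - destruct Ha as [a [d H]]. exists (-a), (-d). intro t. rewrite H. ring.
  - lra.
  - lra.
  - exists l. split; [exact Hl| lra].
Qed.

Lemma affine_minus f g : affine f -> affine g -> affine (fun t => f t - g t).
Proof. intros [a [d H]] [a' [d' H']]. exists (a - a'), (d - d'). intro t. rewrite H, H'. ring. Qed.
Lemma affine_const c : affine (fun _ => c).
Proof. exists c, 0. intro; ring. Qed.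

Section SawFacts.
Variables w1 w2 : R.
Hypothesis H0 : 0 <= w2.
Hypothesis H12 : w2 <= w1.
Hypothesis H1 : w1 <= 1.

Lemma saw_c : saw w1 w2 (1/3) = w1.
Proof. sawt. Qed.
Lemma saw_ge_w2 y : 1/3 <= y -> w2 <= saw w1 w2 y.
Proof. intros; sawt. Qed.
Lemma saw_le_w1 y : y <= 2/3 -> saw w1 w2 y <= w1.
Proof. intros; sawt. Qed.
Lemma saw_01 y : 0 <= y <= 1 -> 0 <= saw w1 w2 y <= 1.
Proof. intros; sawt. Qed.
Lemma saw_lap1 y : y <= 1/3 -> saw w1 w2 y = Rmin (3*y) w1.
Proof. intros; unfold saw; destruct (Rle_dec y (1/3)); [reflexivity|lra]. Qed.
Lemma saw_mono1 u v : u <= v -> v <= 1/3 -> saw w1 w2 u <= saw w1 w2 v.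
Proof. intros; sawt. Qed.
Lemma saw_anti2 u v : 1/3 <= u -> u <= v -> v <= 2/3 -> saw w1 w2 v <= saw w1 w2 u.
Proof. intros; sawt. Qed.
Lemma saw_mono3 u v : 2/3 <= u -> u <= v -> saw w1 w2 u <= saw w1 w2 v.
Proof. intros; sawt. Qed.
Lemma saw_plateau y : (2 - w2)/3 <= y <= (2 + w2)/3 -> saw w1 w2 y = w2.
Proof. intros; sawt. Qed.
Lemma saw_Tb e y : clap e y ->
  ((e = 1%nat \/ e = 2%nat) -> Tb e y <= w1) ->
  ((e <> 1%nat) -> w2 <= Tb e y) ->
  saw w1 w2 y = Tb e y.
Proof.
  intros Hc Ha Hb.
  destruct e as [|[|[|]]]; simpl in *.
  - specialize (Hb ltac:(discriminate)). sawt.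
  - specialize (Ha (or_introl eq_refl)). sawt.
  - specialize (Ha (or_intror eq_refl)). specialize (Hb ltac:(discriminate)). sawt.
  - specialize (Hb ltac:(discriminate)). sawt.
Qed.
End SawFacts.

Lemma saw_lap1_w2 w1 w2 w2' y : y <= 1/3 -> saw w1 w2 y = saw w1 w2' y.
Proof. intros; unfold saw; destruct (Rle_dec y (1/3)); [reflexivity|lra]. Qed.

Lemma saw_conj w1 w2 y : 0 <= w2 -> w2 <= w1 -> w1 <= 1 -> saw (1 - w2) (1 - w1) (1 - y) = 1 - saw w1 w2 y.
Proof. intros; sawt. Qed.

Lemma clap_c e : clap e (1/3) -> Tb e (1/3) = 1.
Proof. destruct e as [|[|[|]]]; simpl; lra. Qed.
Lemma clap_one e : clap e 1 -> Tb e 1 = 1.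
Proof. destruct e as [|[|[|]]]; simpl; lra. Qed.
Lemma clap_bL e b : 0 < b < 1 -> clap e ((2-b)/3) -> Tb e ((2-b)/3) = b.
Proof. destruct e as [|[|[|]]]; simpl; lra. Qed.
Lemma clap_bR e b : 0 < b < 1 -> clap e ((2+b)/3) -> Tb e ((2+b)/3) = b.
Proof. destruct e as [|[|[|]]]; simpl; lra. Qed.
Lemma saw_v2 w1 v b : 0 <= v -> v <= b -> b <= w1 -> w1 <= 1 -> b < 1 -> saw w1 v ((2-b)/3) = b.
Proof. intros; sawt. Qed.
Lemma saw_v3 w1 v b : 0 <= v -> v <= b -> b <= w1 -> w1 <= 1 -> 0 < b -> b < 1 -> saw w1 v ((2+b)/3) = b.
Proof. intros; sawt. Qed.

Lemma bwd (u v : nat -> R) (c : nat -> nat) m n : (m <= n)%nat ->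
  (forall k, (m <= k < n)%nat -> u (S k) = Tb (c k) (u k) /\ v (S k) = Tb (c k) (v k)) ->
  u n = v n -> forall k, (m <= k <= n)%nat -> u k = v k.
Proof.
  intros Hmn H Hn.
  assert (forall j, (j <= n - m)%nat -> u (n - j)%nat = v (n - j)%nat).
  { induction j; intros Hj. - rewrite Nat.sub_0_r; auto.
    - specialize (IHj ltac:(lia)). destruct (H (n - S j)%nat ltac:(lia)) as [A B].
      replace (S (n - S j)) with (n - j)%nat in A, B by lia.
      apply (Tb_inj (c (n - S j)%nat)). congruence. }
  intros k Hk. replace k with (n - (n - k))%nat by lia. apply H0. lia.
Qed.

Lemma oddT_chain_dummy : True. Proof. exact I. Qed.

Open Scope R_scope.

Definition oddT (x : R) := exists (n : nat) (N : Z), Z.odd N = true /\ x * 3 ^ n = IZR N.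
Definition evenT (x : R) := exists (n : nat) (N : Z), Z.even N = true /\ x * 3 ^ n = IZR N.

Lemma pow3_IZR n : 3 ^ n = IZR (3 ^ Z.of_nat n).
Proof. rewrite <- pow_IZR. reflexivity. Qed.

Lemma odd_pow3 n : Z.odd (3 ^ Z.of_nat n) = true.
Proof.
  induction n. - reflexivity.
  - rewrite Nat2Z.inj_succ, Z.pow_succ_r by lia. rewrite Z.odd_mul, IHn. reflexivity.
Qed.

Lemma oddT_c : oddT (1/3).
Proof. exists 1%nat, 1%Z. split; [reflexivity|]. simpl. field. Qed.

Lemma oddT_Tb e y : oddT (Tb e y) -> oddT y.
Proof.
  intros [n [N [HN E]]]. exists (S n).
  assert (Hp : 3 ^ S n = 3 * 3 ^ n) by reflexivity.
  destruct e as [|[|[|]]]; simpl in E.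
  - exists (N + 2 * 3 ^ Z.of_nat n)%Z. split.
    + rewrite Z.odd_add, Z.odd_mul, HN. reflexivity.
    + rewrite plus_IZR, mult_IZR, <- pow3_IZR, Hp, <- E. ring.
  - exists N. split; auto. rewrite Hp, <- E. ring.
  - exists (2 * 3 ^ Z.of_nat n - N)%Z. split.
    + rewrite Z.odd_sub, Z.odd_mul, HN. reflexivity.
    + rewrite minus_IZR, mult_IZR, <- pow3_IZR, Hp, <- E. ring.
  - exists (N + 2 * 3 ^ Z.of_nat n)%Z. split.
    + rewrite Z.odd_add, Z.odd_mul, HN. reflexivity.
    + rewrite plus_IZR, mult_IZR, <- pow3_IZR, Hp, <- E. ring.
Qed.

Lemma oddT_evenT x : oddT x -> evenT (1 - x).
Proof.
  intros [n [N [HN E]]]. exists n, (3 ^ Z.of_nat n - N)%Z. split.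
  - rewrite Z.even_sub. rewrite <- !Z.negb_odd, odd_pow3, HN. reflexivity.
  - rewrite minus_IZR, <- pow3_IZR, <- E. ring.
Qed.

Lemma oddT_evenT_ne x y : oddT x -> evenT y -> x <> y.
Proof.
  intros [n [N [HN E]]] [m [M [HM F]]] Exy. subst y.
  assert (IZR (N * 3 ^ Z.of_nat m) = IZR (M * 3 ^ Z.of_nat n)).
  { rewrite !mult_IZR, <- !pow3_IZR, <- E, <- F. ring. }
  apply eq_IZR in H.
  assert (Z.odd (N * 3 ^ Z.of_nat m) = Z.odd (M * 3 ^ Z.of_nat n)) by (rewrite H; auto).
  rewrite !Z.odd_mul, HN, !odd_pow3 in H0. rewrite <- Z.negb_even, HM in H0. discriminate.
Qed.

Lemma oddT_chain (u : nat -> R) (c : nat -> nat) m n : (m <= n)%nat ->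
  (forall k, (m <= k < n)%nat -> u (S k) = Tb (c k) (u k)) ->
  oddT (u n) -> forall k, (m <= k <= n)%nat -> oddT (u k).
Proof.
  intros Hmn H Hn.
  assert (forall j, (j <= n - m)%nat -> oddT (u (n - j)%nat)).
  { induction j; intros Hj. - rewrite Nat.sub_0_r; auto.
    - specialize (IHj ltac:(lia)).
      assert (E := H (n - S j)%nat ltac:(lia)).
      replace (S (n - S j)) with (n - j)%nat in E by lia.
      apply (oddT_Tb (c (n - S j)%nat)). rewrite <- E. auto. }
  intros k Hk. replace k with (n - (n - k))%nat by lia. apply H0. lia.
Qed.

Close Scope R_scope.

Definition sg (o : nat -> nat) (a k : nat) : nat := Nat.iter k o a.
Lemma sg_S o a k : sg o a (S k) = o (sg o a k).
Proof. reflexivity. Qed.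
Lemma sg_0 o a : sg o a 0 = a.
Proof. reflexivity. Qed.
Lemma sg_lt p o a k : (forall i, (i<p)%nat -> (o i < p)%nat) -> (a < p)%nat -> (sg o a k < p)%nat.
Proof. intros Hr Ha. induction k; simpl; auto. Qed.
Lemma sg_add o a k m : sg o a (k + m) = sg o (sg o a m) k.
Proof. induction k; simpl; auto. Qed.

Lemma NoDup_map_seq (f : nat -> nat) n : (forall k l, (k < n)%nat -> (l < n)%nat -> f k = f l -> k = l) ->
  NoDup (map f (seq 0 n)).
Proof.
  induction n; intros H.
  - constructor.
  - rewrite seq_S, map_app. apply NoDup_app.
    + apply IHn. intros; apply H; lia.
    + simpl. constructor; [intros []|constructor].
    + intros x Hx Hx'. simpl in Hx'. destruct Hx' as [Hx'|[]]. subst x.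
      apply in_map_iff in Hx. destruct Hx as [k [Hk Hk']]. apply in_seq in Hk'.
      assert (k = n) by (apply H; lia). lia.
Qed.

Lemma ex_min (P : nat -> Prop) : (exists n, P n) -> exists n, P n /\ forall m, (m < n)%nat -> ~ P m.
Proof.
  intros [n Hn]. revert Hn.
  induction n as [n IH] using (well_founded_induction Wf_nat.lt_wf). intro Hn.
  destruct (classic (exists m, (m < n)%nat /\ P m)) as [[m [Hm Pm]]|Hno].
  - apply (IH m Hm Pm).
  - exists n; split; auto. intros m Hm Pm; apply Hno; eauto.
Qed.

Section Perm.
Variables (p : nat) (o : nat -> nat).
Hypothesis Hr : forall i, (i < p)%nat -> (o i < p)%nat.
Hypothesis Hi : forall i j, (i < p)%nat -> (j < p)%nat -> o i = o j -> i = j.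

Lemma o_surj : forall i, (i < p)%nat -> exists j, (j < p)%nat /\ o j = i.
Proof.
  intros i Hip.
  assert (Hinc : incl (map o (seq 0 p)) (seq 0 p)).
  { intros x Hx. apply in_map_iff in Hx. destruct Hx as [j [<- Hj]]. apply in_seq in Hj.
    apply in_seq. specialize (Hr j). lia. }
  assert (Hnd : NoDup (map o (seq 0 p))) by (apply NoDup_map_seq; auto).
  assert (H := NoDup_length_incl (l' := seq 0 p) Hnd ltac:(rewrite length_map; lia) Hinc).
  assert (Hin : In i (seq 0 p)) by (apply in_seq; lia).
  apply H in Hin. apply in_map_iff in Hin. destruct Hin as [j [Hj Hj']]. apply in_seq in Hj'.
  exists j; split; [lia|auto].
Qed.

Variable a : nat.
Hypothesis Ha : (a < p)%nat.
Hypothesis Hreach : forall i, (i < p)%nat -> exists k, sg o a k = i.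

Lemma sg_cancel k d : sg o a (k + d) = sg o a k -> sg o a d = a.
Proof.
  induction k; simpl; auto.
  intro H. apply IHk. unfold sg in H. simpl in H. apply Hi in H; auto;
  apply (sg_lt p); auto.
Qed.

Lemma sg_period : sg o a p = a /\
  forall k l, (k < p)%nat -> (l < p)%nat -> sg o a k = sg o a l -> k = l.
Proof.
  assert (Hex : exists d, (0 < d)%nat /\ sg o a d = a).
  { destruct (o_surj a Ha) as [j [Hj Hoj]]. destruct (Hreach j Hj) as [m Hm].
    exists (S m). split; [lia|]. rewrite sg_S, Hm; auto. }
  destruct (ex_min _ Hex) as [d0 [[Hd0 Hsd0] Hmin]].
  assert (Hdist : forall k l, (k < l)%nat -> (l < d0)%nat -> sg o a k = sg o a l -> False).
  { intros k l Hkl Hl E. apply (Hmin (l - k)%nat); [lia|]. split; [lia|].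
    apply (sg_cancel k). replace (k + (l - k))%nat with l by lia. auto. }
  assert (Hper1 : forall k, sg o a (k + d0) = sg o a k).
  { intro k. rewrite sg_add, Hsd0. reflexivity. }
  assert (Hper : forall q r, sg o a (r + q * d0) = sg o a r).
  { induction q; intro r. - f_equal; lia.
    - replace (r + S q * d0)%nat with ((r + q * d0) + d0)%nat by lia. rewrite Hper1. auto. }
  assert (Hmod : forall m, sg o a m = sg o a (m mod d0)).
  { intro m. rewrite (Nat.div_mod_eq m d0) at 1.
    replace (d0 * (m / d0) + m mod d0)%nat with (m mod d0 + (m / d0) * d0)%nat by lia.
    apply Hper. }
  assert (H1 : (p <= d0)%nat).
  { replace d0 with (length (map (sg o a) (seq 0 d0))) by (rewrite length_map, length_seq; auto).
    replace p with (length (seq 0 p)) at 1 by apply length_seq.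
    apply NoDup_incl_length; [apply seq_NoDup|].
    intros i Hi'. apply in_seq in Hi'. destruct (Hreach i ltac:(lia)) as [k Hk].
    apply in_map_iff. exists (k mod d0). split. rewrite <- Hmod; auto.
    apply in_seq. split; [lia|]. apply Nat.mod_upper_bound; lia. }
  assert (H2 : (d0 <= p)%nat).
  { replace d0 with (length (map (sg o a) (seq 0 d0))) by (rewrite length_map, length_seq; auto).
    transitivity (length (seq 0 p)); [|rewrite length_seq; lia].
    apply NoDup_incl_length.
    - apply NoDup_map_seq. intros k l Hk Hl E.
      destruct (Nat.lt_total k l) as [H|[H|H]]; auto; exfalso.
      + apply (Hdist k l); auto.
      + apply (Hdist l k); auto.
    - intros x Hx. apply in_map_iff in Hx. destruct Hx as [k [<- _]]. apply in_seq.
      split; [lia|]. apply sg_lt; auto. }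
  assert (d0 = p) by lia. subst d0.
  split; auto.
  intros k l Hk Hl E. destruct (Nat.lt_total k l) as [H|[H|H]]; auto; exfalso.
  + apply (Hdist k l); auto.
  + apply (Hdist l k); auto.
Qed.

Lemma sg_mod m : sg o a m = sg o a (m mod p).
Proof.
  destruct sg_period as [Hp _].
  assert (Hper : forall q r, sg o a (r + q * p) = sg o a r).
  { induction q; intro r. - f_equal; lia.
    - replace (r + S q * p)%nat with ((r + q * p) + p)%nat by lia.
      rewrite sg_add, Hp. auto. }
  rewrite (Nat.div_mod_eq m p) at 1.
  replace (p * (m / p) + m mod p)%nat with (m mod p + (m / p) * p)%nat by lia.
  apply Hper.
Qed.

End Perm.

Lemma inc_id p o : (forall i, (i < p)%nat -> (o i < p)%nat) ->
  (forall i, (S i < p)%nat -> (o i < o (S i))%nat) -> forall i, (i < p)%nat -> o i = i.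
Proof.
  intros Hr Hinc.
  assert (Hge : forall i, (i < p)%nat -> (i <= o i)%nat).
  { induction i; intros; [lia|]. specialize (IHi ltac:(lia)). specialize (Hinc i H). lia. }
  assert (Hle : forall j i, (i + j = p - 1)%nat -> (i < p)%nat -> (o i + j <= p - 1)%nat).
  { induction j; intros i E Hi.
    - specialize (Hr i Hi). lia.
    - specialize (IHj (S i) ltac:(lia) ltac:(lia)). specialize (Hinc i ltac:(lia)). lia. }
  intros i Hi. specialize (Hge i Hi). specialize (Hle (p - 1 - i)%nat i ltac:(lia) Hi). lia.
Qed.

Lemma argmin_ex (f : nat -> nat) lo hi : (lo < hi)%nat ->
  exists m, (lo <= m < hi)%nat /\ forall i, (lo <= i < hi)%nat -> (f m <= f i)%nat.
Proof.
  intros H. induction hi; [lia|].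
  destruct (Nat.eq_dec lo hi) as [E|E].
  - subst. exists hi. split; [lia|]. intros i Hi. assert (i = hi) by lia. subst; lia.
  - destruct (IHhi ltac:(lia)) as [m [Hm Hmin]].
    destruct (Compare_dec.le_lt_dec (f m) (f hi)).
    + exists m. split; [lia|]. intros i Hi. destruct (Nat.eq_dec i hi); [subst; lia|]. apply Hmin; lia.
    + exists hi. split; [lia|]. intros i Hi. destruct (Nat.eq_dec i hi); [subst; lia|].
      specialize (Hmin i ltac:(lia)). lia.
Qed.

Open Scope R_scope.

Open Scope R_scope.

Definition Sw (w : R*R) := saw (fst w) (snd w).
Definition zz (w : R*R) (k : nat) : R := Nat.iter k (Sw w) (1/3).
Lemma zz_S w k : zz w (S k) = Sw w (zz w k).
Proof. reflexivity. Qed.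
Lemma zz_0 w : zz w 0 = 1/3.
Proof. reflexivity. Qed.

Lemma bone_x p o w : bone Minus p o w -> inT w /\ exists x a, (a < p)%nat /\ x a = 1/3 /\
  (forall i j, (i < j)%nat -> (j < p)%nat -> x i < x j) /\
  (forall i, (i < p)%nat -> Sw w (x i) = x (o i)) /\
  (forall i, (i < p)%nat -> exists k, zz w k = x i).
Proof.
  intros [HT [x [Hinc [Hit [Hre Hs]]]]]. split; auto.
  destruct (Hit 0%nat) as [a [Ha Hxa]]. exists x, a. simpl in Hxa.
  repeat split; auto.
Qed.

Section XW.
Variables (p : nat) (o : nat -> nat) (w : R*R) (x : nat -> R) (a : nat).
Hypothesis Hp : (2 <= p)%nat.
Hypothesis Hr : forall i, (i < p)%nat -> (o i < p)%nat.
Hypothesis Hi : forall i j, (i < p)%nat -> (j < p)%nat -> o i = o j -> i = j.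
Hypothesis HT : inT w.
Hypothesis Ha : (a < p)%nat.
Hypothesis Hxa : x a = 1/3.
Hypothesis Hinc : forall i j, (i < j)%nat -> (j < p)%nat -> x i < x j.
Hypothesis Hsx : forall i, (i < p)%nat -> Sw w (x i) = x (o i).
Hypothesis Hrx : forall i, (i < p)%nat -> exists k, zz w k = x i.

Lemma HT' : 0 <= (snd w) /\ (snd w) <= (fst w) /\ (fst w) <= 1.
Proof. destruct HT as [A [B C]]. lra. Qed.

Lemma x_lt_rev i j : (i < p)%nat -> (j < p)%nat -> x i < x j -> (i < j)%nat.
Proof.
  intros Hi' Hj H. destruct (Nat.lt_total i j) as [E|[E|E]]; auto.
  - subst; lra.
  - specialize (Hinc j i E Hi'). lra.
Qed.
Lemma x_le i j : (i <= j)%nat -> (j < p)%nat -> x i <= x j.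
Proof. intros H Hj. destruct (Nat.eq_dec i j). subst; lra. left; apply Hinc; lia. Qed.
Lemma x_le_rev i j : (i < p)%nat -> (j < p)%nat -> x i <= x j -> (i <= j)%nat.
Proof.
  intros Hi' Hj H. destruct (Nat.le_gt_cases i j) as [E|E]; auto.
  specialize (Hinc j i E Hi'). lra.
Qed.
Lemma x_inj i j : (i < p)%nat -> (j < p)%nat -> x i = x j -> i = j.
Proof.
  intros Hi' Hj H. destruct (Nat.lt_total i j) as [E|[E|E]]; auto.
  - specialize (Hinc i j E Hj). lra.
  - specialize (Hinc j i E Hi'). lra.
Qed.

Lemma zz_x k : zz w k = x (sg o a k).
Proof.
  induction k. - rewrite zz_0, sg_0; auto.
  - rewrite zz_S, IHk, sg_S. apply Hsx. apply sg_lt; auto.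
Qed.

Lemma reach_sg i : (i < p)%nat -> exists k, sg o a k = i.
Proof.
  intros Hip. destruct (Hrx i Hip) as [k Hk]. exists k. rewrite zz_x in Hk.
  apply x_inj; auto. apply sg_lt; auto.
Qed.

Lemma zz_01 k : 0 <= zz w k <= 1.
Proof.
  destruct HT' as [A [B C]].
  induction k. - rewrite zz_0; lra.
  - rewrite zz_S. unfold Sw. apply saw_01; auto; lra.
Qed.

Lemma x_01 i : (i < p)%nat -> 0 <= x i <= 1.
Proof. intros H. destruct (Hrx i H) as [k <-]. apply zz_01. Qed.

Lemma Sw_c : Sw w (1/3) = (fst w).
Proof. destruct HT' as [A [B C]]. unfold Sw. apply saw_c; auto. Qed.

Lemma xoa : x (o a) = (fst w).
Proof. rewrite <- Hsx by auto. rewrite Hxa. apply Sw_c. Qed.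

Lemma D1 i : (S i <= a)%nat -> (o i < o (S i))%nat.
Proof.
  intros H. destruct HT' as [A [B C]].
  assert (Hxi : x i < x (S i)) by (apply Hinc; lia).
  assert (Hxs : x (S i) <= 1/3) by (rewrite <- Hxa; apply x_le; lia).
  assert (E : Sw w (x i) <= Sw w (x (S i))) by (unfold Sw; apply saw_mono1; lra).
  rewrite !Hsx in E by lia.
  apply x_le_rev in E; try (apply Hr; lia).
  assert (o i <> o (S i)) by (intro E'; apply Hi in E'; lia). lia.
Qed.

Lemma Dnot_id : ~ (forall i, (S i < p)%nat -> (o i < o (S i))%nat).
Proof.
  intros H. assert (Hid := inc_id p o Hr H).
  assert (Hsa : forall k, sg o a k = a).
  { induction k; auto. rewrite sg_S, IHk. apply Hid; auto. }
  destruct (Hrx 0%nat ltac:(lia)) as [k0 E0]. destruct (Hrx 1%nat ltac:(lia)) as [k1 E1].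
  rewrite zz_x, Hsa in E0, E1. specialize (Hinc 0 1 ltac:(lia) ltac:(lia)). lra.
Qed.

Lemma D2 : (S a < p)%nat.
Proof.
  destruct (Nat.lt_ge_cases (S a) p) as [H|H]; auto. exfalso. apply Dnot_id.
  intros i Hi'. apply D1. lia.
Qed.

Lemma D3 : (o (S a) < o a)%nat.
Proof.
  destruct HT' as [A [B C]].
  assert (HS := D2).
  assert (Hx1 : 1/3 < x (S a)) by (rewrite <- Hxa; apply Hinc; lia).
  assert (Hne : o (S a) <> o a) by (intro E; apply Hi in E; lia).
  destruct (Rle_dec (x (S a)) (2/3)) as [Hle|Hgt].
  - assert (E : Sw w (x (S a)) <= (fst w)) by (unfold Sw; apply saw_le_w1; lra).
    rewrite Hsx in E by lia. rewrite <- xoa in E.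
    apply x_le_rev in E; try (apply Hr; lia). lia.
  - destruct (Nat.lt_ge_cases (o (S a)) (o a)) as [L|L]; auto. exfalso.
    apply Dnot_id. intros i Hi'.
    destruct (Nat.lt_total i a) as [E|[E|E]].
    + apply D1; lia.
    + subst; lia.
    + assert (Hxi : x (S a) <= x i) by (apply x_le; lia).
      assert (Hxs : x i < x (S i)) by (apply Hinc; lia).
      assert (E2 : Sw w (x i) <= Sw w (x (S i))) by (unfold Sw; apply saw_mono3; lra).
      rewrite !Hsx in E2 by lia.
      apply x_le_rev in E2; try (apply Hr; lia).
      assert (o i <> o (S i)) by (intro E'; apply Hi in E'; lia). lia.
Qed.

Variable mu : nat.
Hypothesis Hmu : (a < mu < p)%nat.
Hypothesis Hmin : forall i, (a < i < p)%nat -> (o mu <= o i)%nat.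

Lemma Sw_ge_w2 y : 1/3 <= y -> (snd w) <= Sw w y.
Proof. destruct HT' as [A [B C]]. intros; unfold Sw; apply saw_ge_w2; auto. Qed.

Lemma o_ne_oa i : (i < p)%nat -> i <> a -> x (o i) <> (fst w).
Proof. intros H Hne E. rewrite <- xoa in E. apply x_inj in E; try (apply Hr; lia). apply Hi in E; lia. Qed.

Lemma below_mu i : (a < i < p)%nat -> x (o i) <= x (o mu) -> i = mu.
Proof.
  intros H E. apply x_le_rev in E; try (apply Hr; lia). specialize (Hmin i H).
  assert (o i = o mu) by lia. apply Hi; lia.
Qed.

Lemma La i : (i < a)%nat -> x i < 1/3 /\ Sw w (x i) = 3 * x i.
Proof.
  intros H. assert (Hx : x i < 1/3) by (rewrite <- Hxa; apply Hinc; lia). split; auto.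
  assert (Hn := o_ne_oa i ltac:(lia) ltac:(lia)). rewrite <- Hsx in Hn by lia.
  unfold Sw in *. rewrite saw_lap1 in * by lra. unfold Rmin in *.
  destruct (Rle_dec (3 * x i) (fst w)); auto. congruence.
Qed.

Lemma Lb i : (a < i < mu)%nat -> 1/3 < x i < 2/3 /\ Sw w (x i) = 2 - 3 * x i.
Proof.
  intros H. destruct HT' as [A [B C]].
  assert (Hx : 1/3 < x i) by (rewrite <- Hxa; apply Hinc; lia).
  assert (Hxm : x i < x mu) by (apply Hinc; lia).
  assert (Hx2 : x i < 2/3).
  { destruct (Rlt_dec (x i) (2/3)) as [L|L]; auto. exfalso.
    assert (E : Sw w (x i) <= Sw w (x mu)) by (unfold Sw; apply saw_mono3; lra).
    rewrite !Hsx in E by lia. apply below_mu in E; lia. }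
  split; [lra|].
  assert (Hn := o_ne_oa i ltac:(lia) ltac:(lia)).
  assert (Hm : (snd w) <= Sw w (x mu)) by (apply Sw_ge_w2; lra).
  destruct (Rle_dec (snd w) (2 - 3 * x i)) as [L|L].
  - rewrite <- Hsx in Hn by lia. revert Hn. unfold Sw in *. sawt.
  - exfalso. assert (E : Sw w (x i) = (snd w)) by (unfold Sw in *; sawt).
    assert (E2 : x (o i) <= x (o mu)) by (rewrite <- !Hsx by lia; lra).
    apply below_mu in E2; lia.
Qed.

Lemma Lc i : (mu < i < p)%nat -> 2/3 < x i /\ Sw w (x i) = 3 * x i - 2.
Proof.
  intros H. destruct HT' as [A [B C]].
  assert (Hxmu : 1/3 < x mu) by (rewrite <- Hxa; apply Hinc; lia).
  assert (Hxm : x mu < x i) by (apply Hinc; lia).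
  assert (Hx2 : 2/3 < x i).
  { destruct (Rlt_dec (2/3) (x i)) as [L|L]; auto. exfalso.
    assert (E : Sw w (x i) <= Sw w (x mu)) by (unfold Sw; apply saw_anti2; lra).
    rewrite !Hsx in E by lia. apply below_mu in E; lia. }
  split; [lra|].
  assert (Hm : (snd w) <= Sw w (x mu)) by (apply Sw_ge_w2; lra).
  destruct (Rle_dec (snd w) (3 * x i - 2)) as [L|L].
  - unfold Sw in *. sawt.
  - exfalso. assert (E : Sw w (x i) = (snd w)) by (unfold Sw in *; sawt).
    assert (E2 : x (o i) <= x (o mu)) by (rewrite <- !Hsx by lia; lra).
    apply below_mu in E2; lia.
Qed.

Lemma Lm : 1/3 < x mu /\
  ((x mu <= 2/3 /\ Sw w (x mu) = 2 - 3 * x mu) \/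
   (2/3 <= x mu /\ Sw w (x mu) = 3 * x mu - 2) \/
   (Sw w (x mu) = (snd w) /\ (2 - (snd w))/3 <= x mu <= (2 + (snd w))/3)).
Proof.
  destruct HT' as [A [B C]].
  assert (Hx : 1/3 < x mu) by (rewrite <- Hxa; apply Hinc; lia). split; auto.
  assert (Hn := o_ne_oa mu ltac:(lia) ltac:(lia)). rewrite <- Hsx in Hn by lia.
  revert Hn. unfold Sw in *. intro Hn.
  destruct (Rle_dec (x mu) (2/3)).
  - destruct (Rle_dec (snd w) (2 - 3 * x mu)).
    + left. split; auto. revert Hn; sawt.
    + right; right. split; [revert Hn; sawt| lra].
  - destruct (Rle_dec (snd w) (3 * x mu - 2)).
    + right; left. split; [lra|]. sawt.
    + right; right. split; [sawt|lra].
Qed.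

Lemma Lr i : (a < i < p)%nat -> x (o mu) <= x (o i).
Proof. intros H. apply x_le; [apply Hmin; auto| apply Hr; lia]. Qed.

End XW.

Open Scope R_scope.

Lemma zz_add w k m : zz w (k + m) = Nat.iter k (Sw w) (zz w m).
Proof. induction k; simpl; auto. rewrite IHk. reflexivity. Qed.

Fixpoint findk (f : nat -> nat) (i n : nat) : nat :=
  match n with O => O | S n' => if Nat.eqb (f n') i then n' else findk f i n' end.
Lemma findk_spec f i n : (exists k, (k < n)%nat /\ f k = i) -> f (findk f i n) = i /\ (findk f i n < n)%nat.
Proof.
  induction n; intros [k [Hk Hf]]; [lia|]. simpl.
  destruct (Nat.eqb_spec (f n) i). - split; auto.
  - destruct (Nat.eq_dec k n). subst; contradiction.
    destruct IHn as [A B]. exists k; split; auto; lia. split; auto.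
Qed.

Section Common.
Variables (p : nat) (o : nat -> nat) (a mu k0 : nat).
Hypothesis Hp : (2 <= p)%nat.
Hypothesis Hr : forall i, (i < p)%nat -> (o i < p)%nat.
Hypothesis Hi : forall i j, (i < p)%nat -> (j < p)%nat -> o i = o j -> i = j.
Hypothesis Ha : (a < p)%nat.
Hypothesis HD1 : forall i, (S i <= a)%nat -> (o i < o (S i))%nat.
Hypothesis HD3 : (o (S a) < o a)%nat.
Hypothesis Hmu : (a < mu < p)%nat.
Hypothesis Hmin : forall i, (a < i < p)%nat -> (o mu <= o i)%nat.
Hypothesis Hreach : forall i, (i < p)%nat -> exists k, sg o a k = i.
Hypothesis Hk0 : sg o a k0 = mu.
Hypothesis Hk0p : (k0 < p)%nat.

Definition ecode k := if Nat.ltb (sg o a k) a then 1%nat else if Nat.ltb (sg o a k) mu then 2%nat else 3%nat.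

Lemma sgP : sg o a p = a /\ forall k l, (k < p)%nat -> (l < p)%nat -> sg o a k = sg o a l -> k = l.
Proof. apply sg_period; auto. Qed.

Lemma sg_lt' k : (sg o a k < p)%nat.
Proof. apply sg_lt; auto. Qed.

Lemma k0_pos : (0 < k0)%nat.
Proof. destruct k0; [|lia]. rewrite sg_0 in Hk0. lia. Qed.

Lemma bone_xa w : bone Minus p o w -> inT w /\ exists x, x a = 1/3 /\
  (forall i j, (i < j)%nat -> (j < p)%nat -> x i < x j) /\
  (forall i, (i < p)%nat -> Sw w (x i) = x (o i)) /\
  (forall i, (i < p)%nat -> exists k, zz w k = x i).
Proof.
  intros Hb. destruct (bone_x p o w Hb) as [HT [x [a' [Ha' [Hxa [Hinc [Hsx Hrx]]]]]]].
  split; auto. exists x.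
  assert (a' = a).
  { assert (D1' : forall i, (S i <= a')%nat -> (o i < o (S i))%nat) by (intros; eapply D1; eauto).
    assert (D3' : (o (S a') < o a')%nat) by (eapply D3; eauto).
    destruct (Nat.lt_total a' a) as [L|[L|L]]; auto.
    - specialize (HD1 a' ltac:(lia)). lia.
    - specialize (D1' a ltac:(lia)). lia. }
  subst a'. repeat split; auto.
Qed.

Section W.
Variable w : R*R.
Hypothesis Hb : bone Minus p o w.

Lemma G_inT : inT w.
Proof. apply (bone_xa w Hb). Qed.

Lemma G_HT : 0 <= snd w /\ snd w <= fst w /\ fst w <= 1.
Proof. destruct G_inT as [A [B C]]. lra. Qed.

Lemma G_zz_x : exists x, x a = 1/3 /\
  (forall i j, (i < j)%nat -> (j < p)%nat -> x i < x j) /\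
  (forall i, (i < p)%nat -> Sw w (x i) = x (o i)) /\
  (forall i, (i < p)%nat -> exists k, zz w k = x i) /\
  (forall k, zz w k = x (sg o a k)).
Proof.
  destruct (bone_xa w Hb) as [HT [x [Hxa [Hinc [Hsx Hrx]]]]].
  exists x. repeat split; auto. intro k. eapply zz_x; eauto.
Qed.

Lemma G_01 k : 0 <= zz w k <= 1.
Proof.
  destruct (bone_xa w Hb) as [HT [x [Hxa [Hinc [Hsx Hrx]]]]].
  eapply zz_01; eauto.
Qed.

Lemma G_per : zz w p = 1/3.
Proof.
  destruct G_zz_x as [x [Hxa [_ [_ [_ Hz]]]]]. rewrite Hz. destruct sgP as [E _]. rewrite E; auto.
Qed.

Lemma G_mod k : zz w k = zz w (k mod p).
Proof.
  assert (Hp1 : forall r, zz w (r + p) = zz w r).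
  { intro r. rewrite zz_add, G_per. reflexivity. }
  assert (Hper : forall q r, zz w (r + q * p) = zz w r).
  { induction q; intro r. - f_equal; lia.
    - replace (r + S q * p)%nat with ((r + q * p) + p)%nat by lia.
      rewrite Hp1. apply IHq. }
  rewrite (Nat.div_mod_eq k p) at 1.
  replace (p * (k / p) + k mod p)%nat with (k mod p + (k / p) * p)%nat by lia.
  apply Hper.
Qed.

Lemma G_dist k l : (k < p)%nat -> (l < p)%nat -> zz w k = zz w l -> k = l.
Proof.
  intros Hk Hl E. destruct G_zz_x as [x [Hxa [Hinc [_ [_ Hz]]]]]. rewrite !Hz in E.
  apply (x_inj p x) in E; auto; try apply sg_lt'. destruct sgP as [_ D]. apply D; auto.
Qed.

Lemma G_dist1 k l : (1 <= k <= p)%nat -> (1 <= l <= p)%nat -> zz w k = zz w l -> k = l.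
Proof.
  intros Hk Hl E. rewrite (G_mod k), (G_mod l) in E. apply G_dist in E; try (apply Nat.mod_upper_bound; lia).
  destruct (Nat.eq_dec k p); destruct (Nat.eq_dec l p); subst; auto.
  - rewrite Nat.Div0.mod_same, Nat.mod_small in E by lia. lia.
  - rewrite Nat.Div0.mod_same, Nat.mod_small in E by lia. lia.
  - rewrite !Nat.mod_small in E by lia. auto.
Qed.

Lemma G_ord k l : (k < p)%nat -> (l < p)%nat -> (sg o a k < sg o a l)%nat -> zz w k < zz w l.
Proof.
  intros Hk Hl H. destruct G_zz_x as [x [Hxa [Hinc [_ [_ Hz]]]]]. rewrite !Hz. apply Hinc; auto. apply sg_lt'.
Qed.

Lemma G_ord_rev k l : (k < p)%nat -> (l < p)%nat -> zz w k < zz w l -> (sg o a k < sg o a l)%nat.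
Proof.
  intros Hk Hl H. destruct G_zz_x as [x [Hxa [Hinc [_ [_ Hz]]]]]. rewrite !Hz in H.
  apply (x_lt_rev p x) in H; auto; apply sg_lt'.
Qed.

Lemma G_w1 : zz w 1 = fst w.
Proof. rewrite zz_S, zz_0. unfold Sw. destruct G_HT as [A [B C]]. apply saw_c; auto. Qed.

Lemma G_step k : (0 < k < p)%nat -> k <> k0 ->
  Sw w (zz w k) = Tb (ecode k) (zz w k) /\ clap (ecode k) (zz w k) /\
  (ecode k = 1%nat -> zz w k < 1/3) /\ (ecode k <> 1%nat -> 1/3 < zz w k) /\
  (ecode k = 2%nat -> zz w k < 2/3) /\ (ecode k = 3%nat -> 2/3 < zz w k).
Proof.
  intros Hk Hne.
  destruct (bone_xa w Hb) as [HT [x [Hxa [Hinc [Hsx Hrx]]]]].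
  assert (Hz : zz w k = x (sg o a k)) by (eapply zz_x; eauto).
  destruct sgP as [_ D].
  assert (Hsa : sg o a k <> a) by (intro E; rewrite <- (sg_0 o a) in E; apply D in E; lia).
  assert (Hsm : sg o a k <> mu) by (intro E; rewrite <- Hk0 in E; apply D in E; lia).
  assert (Hsp := sg_lt' k).
  assert (H01 : 0 <= x (sg o a k) <= 1) by (eapply x_01; eauto).
  unfold ecode. rewrite Hz.
  destruct (Nat.ltb_spec (sg o a k) a).
  - destruct (La p o w x a Hp Hr Hi HT Ha Hxa Hinc Hsx mu Hmu (sg o a k)) as [A B]; auto.
    simpl. repeat split; try lra; try discriminate. intro; congruence.
  - destruct (Nat.ltb_spec (sg o a k) mu).
    + destruct (Lb p o w x a Hp Hr Hi HT Ha Hxa Hinc Hsx mu Hmu Hmin (sg o a k)) as [A B]; [lia|].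
      simpl. repeat split; try lra; try discriminate.
    + destruct (Lc p o w x a Hp Hr Hi HT Ha Hxa Hinc Hsx mu Hmu Hmin (sg o a k)) as [A B]; [lia|].
      simpl. repeat split; try lra; try discriminate.
Qed.

Lemma G_k0 : 1/3 < zz w k0 /\
  ((zz w k0 <= 2/3 /\ Sw w (zz w k0) = 2 - 3 * zz w k0) \/
   (2/3 <= zz w k0 /\ Sw w (zz w k0) = 3 * zz w k0 - 2) \/
   (Sw w (zz w k0) = snd w /\ (2 - snd w)/3 <= zz w k0 <= (2 + snd w)/3)).
Proof.
  destruct (bone_xa w Hb) as [HT [x [Hxa [Hinc [Hsx Hrx]]]]].
  assert (Hz : zz w k0 = x mu) by (rewrite <- Hk0; eapply zz_x; eauto).
  rewrite Hz. apply (Lm p o w x a Hp Hr Hi HT Ha Hxa Hinc Hsx mu Hmu).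
Qed.

Lemma G_right k : 1/3 < zz w k -> zz w (S k0) <= zz w (S k).
Proof.
  intros H.
  destruct (bone_xa w Hb) as [HT [x [Hxa [Hinc [Hsx Hrx]]]]].
  assert (Hz : forall k, zz w k = x (sg o a k)) by (intro; eapply zz_x; eauto).
  rewrite !Hz in *. rewrite !sg_S, Hk0.
  apply (Lr p o x a Hp Hr Ha Hinc mu Hmu Hmin).
  split; [|apply sg_lt']. rewrite <- Hxa in H. apply (x_lt_rev p x) in H; auto; apply sg_lt'.
Qed.

Lemma G_w1lt : fst w < 1.
Proof.
  destruct G_HT as [A [B C]].
  destruct (Rlt_dec (fst w) 1) as [L|L]; auto. exfalso.
  assert (E : fst w = 1) by lra.
  assert (E2 : zz w 2 = zz w 1).
  { rewrite (zz_S w 1), G_w1. unfold Sw. rewrite E. sawt. }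
  apply G_dist1 in E2; lia.
Qed.

Lemma G_beta_pos : 0 < zz w (S k0).
Proof.
  destruct G_HT as [A [B C]].
  destruct (G_01 (S k0)) as [L _]. destruct L as [L|L]; auto. exfalso.
  destruct (Nat.eq_dec (S k0) p) as [E|E].
  - rewrite E, G_per in L. lra.
  - assert (E2 : zz w (S (S k0)) = zz w (S k0)).
    { rewrite (zz_S w (S k0)), <- L. unfold Sw. sawt. }
    apply G_dist1 in E2; lia.
Qed.

Lemma G_beta_lt : zz w (S k0) < fst w.
Proof.
  destruct (bone_xa w Hb) as [HT [x [Hxa [Hinc [Hsx Hrx]]]]].
  assert (Hz : forall k, zz w k = x (sg o a k)) by (intro; eapply zz_x; eauto).
  rewrite Hz, sg_S, Hk0.
  assert (E : x (o a) = fst w) by (eapply xoa; eauto).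
  rewrite <- E. apply Hinc; [|apply Hr; lia].
  assert (H1 := Hmin (S a) ltac:(lia)). lia.
Qed.

End W.

Lemma builder w : inT w -> zz w p = 1/3 ->
  (forall k l, (k < p)%nat -> (l < p)%nat -> (sg o a k < sg o a l)%nat -> zz w k < zz w l) ->
  bone Minus p o w.
Proof.
  intros HT Hper Hord.
  destruct sgP as [Hsp D].
  assert (Hzmod : forall k, zz w k = zz w (k mod p)).
  { assert (Hper' : forall q r, zz w (r + q * p) = zz w r).
    { assert (Hp1 : forall r, zz w (r + p) = zz w r).
      { intro r. rewrite zz_add, Hper. reflexivity. }
      induction q; intro r. - f_equal; lia.
      - replace (r + S q * p)%nat with ((r + q * p) + p)%nat by lia.
        rewrite Hp1. apply IHq. }
    intro k. rewrite (Nat.div_mod_eq k p) at 1.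
    replace (p * (k / p) + k mod p)%nat with (k mod p + (k / p) * p)%nat by lia.
    apply Hper'. }
  set (tau := fun i => findk (sg o a) i p).
  assert (Htau : forall i, (i < p)%nat -> sg o a (tau i) = i /\ (tau i < p)%nat).
  { intros i Hip. apply findk_spec. destruct (Hreach i Hip) as [k Hk].
    exists (k mod p). split; [apply Nat.mod_upper_bound; lia|].
    rewrite <- (sg_mod p o Hr Hi a Ha Hreach). auto. }
  assert (Htau_u : forall i k, (k < p)%nat -> sg o a k = i -> tau i = k).
  { intros i k Hk E. assert (i < p)%nat by (rewrite <- E; apply sg_lt'). destruct (Htau i H) as [A B].
    apply D; auto. congruence. }
  split; auto.
  exists (fun i => zz w (tau i)). split; [|split; [|split]].
  - intros i j Hij Hj. destruct (Htau i ltac:(lia)) as [A B]. destruct (Htau j Hj) as [A' B'].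
    apply Hord; auto. rewrite A, A'. auto.
  - intro k. exists (sg o a (k mod p)). split; [apply sg_lt'|].
    rewrite (Htau_u _ (k mod p)); [|apply Nat.mod_upper_bound; lia|auto].
    simpl. rewrite <- Hzmod. reflexivity.
  - intros i Hip. exists (tau i). reflexivity.
  - intros i Hip. destruct (Htau i Hip) as [A B].
    change (saw (fst w) (snd w) (zz w (tau i))) with (zz w (S (tau i))).
    destruct (Nat.eq_dec (S (tau i)) p) as [E|E].
    + assert (o i = a) by (rewrite <- A, <- sg_S, E; auto).
      rewrite H, (Htau_u a 0%nat); [| lia| auto]. rewrite E, Hper. reflexivity.
    + rewrite (Htau_u (o i) (S (tau i))); [reflexivity|lia|]. rewrite sg_S, A; auto.
Qed.

Lemma w2change w w' : bone Minus p o w -> inT w' ->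
  (forall k, (k < p)%nat -> Sw w' (zz w k) = Sw w (zz w k)) ->
  bone Minus p o w' /\ forall k, zz w' k = zz w k.
Proof.
  intros Hbw HT' H.
  assert (Hz : forall k, zz w' k = zz w k).
  { induction k; auto. rewrite !zz_S, IHk, (G_mod w Hbw k), H, <- (G_mod w Hbw k); auto.
    apply Nat.mod_upper_bound; lia. }
  split; auto. apply builder; auto.
  - rewrite Hz. apply G_per; auto.
  - intros k l Hk Hl E. rewrite !Hz. apply G_ord; auto.
Qed.


Definition Ushape (A2 A3 b : R) (w : R*R) : Prop :=
  (fst w = A2 /\ 0 <= snd w <= b) \/
  (snd w = b /\ (A2 <= fst w <= A3 \/ A3 <= fst w <= A2)) \/
  (fst w = A3 /\ 0 <= snd w <= b).

Section Horiz.
Variables t0 bt : R.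
Hypothesis Hb0 : bone Minus p o (t0, bt).
Hypothesis HPi : (2 - bt)/3 <= zz (t0,bt) k0 <= (2 + bt)/3.
Hypothesis Hbt : zz (t0,bt) (S k0) = bt.
Local Notation w0 := (t0, bt).

Fixpoint M (k : nat) (t : R) : R :=
  match k with O => t | S k' => Tb (ecode (S k')) (M k' t) end.

Lemma k0S : S (pred k0) = k0.
Proof. assert (H := k0_pos). lia. Qed.

Lemma HT0 : 0 <= bt /\ bt <= t0 /\ t0 <= 1.
Proof. apply (G_HT w0 Hb0). Qed.
Lemma t0lt1 : t0 < 1.
Proof. apply (G_w1lt w0 Hb0). Qed.
Lemma bt_pos : 0 < bt.
Proof. rewrite <- Hbt. apply (G_beta_pos w0 Hb0). Qed.
Lemma zz0_1 : zz w0 1 = t0.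
Proof. apply (G_w1 w0 Hb0). Qed.
Lemma bt_lt_t0 : bt < t0.
Proof.
  destruct HT0 as [A [B C]]. destruct B as [B|B]; auto. exfalso.
  assert (E : zz w0 (S k0) = zz w0 1) by (rewrite Hbt, zz0_1; auto).
  apply (G_dist1 w0 Hb0) in E; try lia.
  assert (H := k0_pos). lia.
Qed.
Lemma bt_lt1 : bt < 1.
Proof. assert (H := bt_lt_t0). assert (H' := t0lt1). lra. Qed.

Lemma M_t0 k : (k < k0)%nat -> M k t0 = zz w0 (S k).
Proof.
  induction k; intros Hk.
  - symmetry. apply zz0_1.
  - change (M (S k) t0) with (Tb (ecode (S k)) (M k t0)). rewrite IHk by lia.
    destruct (G_step w0 Hb0 (S k) ltac:(lia) ltac:(lia)) as [E _].
    rewrite (zz_S w0 (S k)), E. reflexivity.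
Qed.

Lemma M_aff k : affine (M k).
Proof.
  induction k. - exists 0, 1. intro; simpl; ring.
  - simpl. apply (Tb_affine (ecode (S k)) (M k)). auto.
Qed.

Lemma M_aff_nz k : exists a d, d <> 0 /\ forall t, M k t = a + d * t.
Proof.
  induction k. - exists 0, 1. split; [lra|]. intro; simpl; ring.
  - destruct IHk as [a1 [d [Hd H]]].
    destruct (Tb_affine_nz (ecode (S k)) a1 d Hd) as [a' [d' [Hd' H']]].
    exists a', d'. split; auto. intro t. simpl. rewrite H. apply H'.
Qed.

Definition Pi s := (2 - bt)/3 <= M (pred k0) s <= (2 + bt)/3.

Lemma Pi_t0 : Pi t0.
Proof. unfold Pi. rewrite M_t0, k0S; auto. assert (H := k0_pos). lia. Qed.

Lemma Pi_conv s l : Pi s -> 0 <= l <= 1 -> Pi (t0 + l * (s - t0)).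
Proof.
  intros H Hl. unfold Pi in *. rewrite affine_conv by apply M_aff.
  assert (H0 := Pi_t0). unfold Pi in H0. nra.
Qed.

Lemma C0 s : Pi s -> forall j, (j <= pred k0)%nat -> 0 <= M (pred k0 - j) s <= 1.
Proof.
  intros HP. assert (H1 := bt_lt1). assert (H2 := bt_pos).
  induction j; intros Hj.
  - rewrite Nat.sub_0_r. unfold Pi in HP. lra.
  - specialize (IHj ltac:(lia)).
    replace (pred k0 - j)%nat with (S (pred k0 - S j)) in IHj by lia.
    simpl in IHj. eapply clap_01. apply Tb_clap. exact IHj.
Qed.

Lemma C0b s k : Pi s -> (k <= pred k0)%nat -> 0 <= M k s <= 1.
Proof. intros HP Hk. replace k with (pred k0 - (pred k0 - k))%nat by lia. apply C0; auto; lia. Qed.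

Lemma C0a s k : Pi s -> (k < pred k0)%nat -> clap (ecode (S k)) (M k s).
Proof. intros HP Hk. apply Tb_clap. apply (C0b s (S k)); auto. Qed.

Lemma N0 s : Pi s -> forall k, (k <= pred k0)%nat -> M k s <> 1/3 /\ M k s <> 1.
Proof.
  intros HP. assert (H1 := bt_lt1). assert (H2 := bt_pos).
  assert (forall j, (j <= pred k0)%nat -> M (pred k0 - j) s <> 1/3 /\ M (pred k0 - j) s <> 1).
  { induction j; intros Hj.
    - rewrite Nat.sub_0_r. unfold Pi in HP. split; lra.
    - specialize (IHj ltac:(lia)).
      replace (pred k0 - j)%nat with (S (pred k0 - S j)) in IHj by lia. simpl in IHj.
      assert (Hc := C0a s (pred k0 - S j) HP ltac:(lia)).
      split; intro E; rewrite E in Hc, IHj.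
      + apply IHj. apply clap_c; auto.
      + apply IHj. apply clap_one; auto. }
  intros k Hk. replace k with (pred k0 - (pred k0 - k))%nat by lia. apply H; lia.
Qed.

Lemma plat0 y : (2 - bt)/3 <= y <= (2 + bt)/3 -> Sw w0 y = bt.
Proof. intros. destruct HT0 as [A [B C]]. unfold Sw. simpl. apply saw_plateau; auto. Qed.

Lemma N1 s : Pi s -> forall k, (k <= pred k0)%nat -> forall l, (k0 < l <= p)%nat -> M k s <> zz w0 l.
Proof.
  intros HP. assert (H1 := bt_lt1). assert (H2 := bt_pos).
  assert (forall j, (j <= pred k0)%nat -> forall l, (k0 < l <= p)%nat -> M (pred k0 - j) s <> zz w0 l).
  { induction j; intros Hj l Hl E.
    - rewrite Nat.sub_0_r in E. unfold Pi in HP. rewrite E in HP.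
      destruct (Nat.eq_dec l p) as [El|El].
      + subst l. rewrite (G_per w0 Hb0) in HP. lra.
      + assert (E2 : zz w0 (S l) = zz w0 (S k0)).
        { rewrite zz_S, Hbt. apply plat0. auto. }
        apply (G_dist1 w0 Hb0) in E2; lia.
    - specialize (IHj ltac:(lia)).
      replace (pred k0 - j)%nat with (S (pred k0 - S j)) in IHj by lia. simpl in IHj.
      set (k := (pred k0 - S j)%nat) in *.
      destruct (Nat.eq_dec l p) as [El|El].
      + subst l. rewrite (G_per w0 Hb0) in E. apply (proj1 (N0 s HP k ltac:(lia))); auto.
      + destruct (G_step w0 Hb0 l ltac:(lia) ltac:(lia)) as [Es [Hcl _]].
        assert (Hc := C0a s k HP ltac:(lia)).
        apply (IHj (S l) ltac:(lia)). rewrite zz_S, Es, E.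
        apply clap_agree; auto. rewrite <- E; auto. }
  intros k Hk. replace k with (pred k0 - (pred k0 - k))%nat by lia. apply H; lia.
Qed.

Lemma Push s k l : Pi s -> (k < pred k0)%nat -> (l < pred k0)%nat -> M k s = M l s -> M (S k) s = M (S l) s.
Proof.
  intros HP Hk Hl E. simpl. rewrite E. apply clap_agree.
  - rewrite <- E. apply C0a; auto.
  - apply C0a; auto.
Qed.

Lemma NotPi s m : Pi s -> (m < pred k0)%nat -> ~ ((2 - bt)/3 <= M m s <= (2 + bt)/3).
Proof.
  intros HP Hm HIn. assert (H1 := bt_lt1). assert (H2 := bt_pos).
  assert (Ht0 : ~ ((2 - bt)/3 <= M m t0 <= (2 + bt)/3)).
  { rewrite M_t0 by lia. intro HI.
    assert (E2 : zz w0 (S (S m)) = zz w0 (S k0)) by (rewrite zz_S, Hbt; apply plat0; auto).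
    apply (G_dist1 w0 Hb0) in E2; lia. }
  assert (Hfin : forall s', Pi s' -> M m s' = (2 - bt)/3 \/ M m s' = (2 + bt)/3 -> False).
  { intros s' HP' [E|E].
    - apply (N1 s' HP' (S m) ltac:(lia) (S k0) ltac:(lia)). change (M (S m) s') with (Tb (ecode (S m)) (M m s')). rewrite E, Hbt.
      apply clap_bL; [lra|]. rewrite <- E. apply C0a; auto.
    - apply (N1 s' HP' (S m) ltac:(lia) (S k0) ltac:(lia)). change (M (S m) s') with (Tb (ecode (S m)) (M m s')). rewrite E, Hbt.
      apply clap_bR; [lra|]. rewrite <- E. apply C0a; auto. }
  destruct (Rlt_dec (M m t0) ((2 - bt)/3)) as [L|L].
  - destruct (affine_ivt (M m) t0 s ((2-bt)/3) (M_aff m) L ltac:(lra)) as [l [Hl E]].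
    apply (Hfin _ (Pi_conv s l HP Hl)). auto.
  - assert (L' : (2 + bt)/3 < M m t0) by lra.
    destruct (affine_ivt' (M m) t0 s ((2+bt)/3) (M_aff m) L' ltac:(lra)) as [l [Hl E]].
    apply (Hfin _ (Pi_conv s l HP Hl)). auto.
Qed.

Lemma N2 s : Pi s -> forall k l, (k < l <= pred k0)%nat -> M k s <> M l s.
Proof.
  intros HP k l Hkl E.
  assert (Hj : forall j, (j <= pred k0 - l)%nat -> M (k + j) s = M (l + j) s).
  { induction j; intros Hj. - rewrite !Nat.add_0_r; auto.
    - rewrite !Nat.add_succ_r. apply Push; auto; try lia. apply IHj; lia. }
  specialize (Hj (pred k0 - l)%nat ltac:(lia)).
  replace (l + (pred k0 - l))%nat with (pred k0) in Hj by lia.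
  apply (NotPi s (k + (pred k0 - l)) HP ltac:(lia)). rewrite Hj. exact HP.
Qed.

Lemma nocross f g s : affine f -> affine g -> (forall s', Pi s' -> f s' <> g s') ->
  f t0 < g t0 -> Pi s -> f s < g s.
Proof.
  intros Hf Hg Hne H0 HP. destruct (Rlt_dec (f s) (g s)) as [L|L]; auto. exfalso.
  destruct (affine_ivt (fun t => f t - g t) t0 s 0 (affine_minus f g Hf Hg) ltac:(lra) ltac:(lra)) as [l [Hl E]].
  apply (Hne _ (Pi_conv s l HP Hl)). lra.
Qed.

Definition zs (s : R) (k : nat) : R :=
  if andb (Nat.leb 1 k) (Nat.leb k k0) then M (pred k) s else zz w0 k.

Lemma zs_mov s k : (1 <= k <= k0)%nat -> zs s k = M (pred k) s.
Proof. intros H. unfold zs. destruct (Nat.leb_spec 1 k); destruct (Nat.leb_spec k k0); simpl; auto; lia. Qed.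
Lemma zs_fix s k : (k = 0 \/ k0 < k)%nat -> zs s k = zz w0 k.
Proof. intros H. unfold zs. destruct (Nat.leb_spec 1 k); destruct (Nat.leb_spec k k0); simpl; auto; lia. Qed.
Lemma zs_t0 k : zs t0 k = zz w0 k.
Proof.
  destruct (Nat.le_gt_cases 1 k); destruct (Nat.le_gt_cases k k0).
  - rewrite zs_mov, M_t0 by lia. f_equal. lia.
  - apply zs_fix; lia.
  - apply zs_fix; lia.
  - apply zs_fix; lia.
Qed.

Lemma zs_ne s k l : Pi s -> (k <= p)%nat -> (l <= p)%nat -> k <> l -> zz w0 k <> zz w0 l ->
  forall s', Pi s' -> zs s' k <> zs s' l.
Proof.
  intros _ Hk Hl Hkl Hz s' HP.
  destruct (Nat.le_gt_cases 1 k) as [K1|K1]; destruct (Nat.le_gt_cases k k0) as [K2|K2];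
  destruct (Nat.le_gt_cases 1 l) as [L1|L1]; destruct (Nat.le_gt_cases l k0) as [L2|L2];
  repeat (first [rewrite (zs_mov s' k) by lia | rewrite (zs_fix s' k) by lia]);
  repeat (first [rewrite (zs_mov s' l) by lia | rewrite (zs_fix s' l) by lia]);
  auto; try lia.
  - destruct (Nat.lt_total k l) as [E|[E|E]]; [|lia|].
    + apply N2; auto; lia.
    + intro E'. symmetry in E'. revert E'. apply N2; auto; lia.
  - apply N1; auto; lia.
  - assert (l = 0)%nat by lia. subst l. rewrite zz_0. apply N0; auto; lia.
  - intro E. symmetry in E. revert E. apply N1; auto; lia.
  - assert (k = 0)%nat by lia. subst k. rewrite zz_0. intro E. symmetry in E. revert E. apply N0; auto; lia.
Qed.

Lemma zs_aff k : affine (fun s => zs s k).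
Proof.
  destruct (Nat.le_gt_cases 1 k); destruct (Nat.le_gt_cases k k0).
  - destruct (M_aff (pred k)) as [a0 [d H']]. exists a0, d. intro t. rewrite zs_mov by lia. auto.
  - exists (zz w0 k), 0. intro t. rewrite zs_fix by lia. ring.
  - exists (zz w0 k), 0. intro t. rewrite zs_fix by lia. ring.
  - exists (zz w0 k), 0. intro t. rewrite zs_fix by lia. ring.
Qed.

Lemma N3 s k l : Pi s -> (k <= p)%nat -> (l <= p)%nat -> zz w0 k < zz w0 l -> zs s k < zs s l.
Proof.
  intros HP Hk Hl H.
  apply (nocross (fun s => zs s k) (fun s => zs s l)); auto; try apply zs_aff.
  - intros s' HP'. apply (zs_ne s); auto. intro; subst; lra. lra.
  - rewrite !zs_t0. auto.
Qed.

Lemma s_le1 s : Pi s -> s <= 1.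
Proof. intros HP. assert (H := C0b s 0 HP ltac:(lia)). simpl in H. lra. Qed.

Lemma bt_le_s s : Pi s -> bt < s.
Proof.
  intros HP. assert (Hk := k0_pos). assert (H := N3 s (S k0) 1 HP ltac:(lia) ltac:(lia)).
  rewrite zs_fix, zs_mov in H by lia. change (M (pred 1) s) with s in H. rewrite Hbt, zz0_1 in H.
  apply H. apply bt_lt_t0.
Qed.

Lemma N4 s : Pi s -> forall k, (k <= p)%nat -> zz (s, bt) k = zs s k.
Proof.
  intros HP. assert (H1 := bt_lt1). assert (H2 := bt_pos).
  assert (Hs1 := s_le1 s HP). assert (Hbs := bt_le_s s HP). assert (Hk0' := k0_pos).
  destruct HT0 as [T1 [T2 T3]].
  induction k; intros Hk.
  - rewrite zs_fix by lia. reflexivity.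
  - rewrite zz_S, IHk by lia. unfold Sw. simpl.
    destruct (Nat.eq_dec k 0) as [E0|E0].
    + subst k. rewrite zs_fix, zz_0 by lia. rewrite zs_mov by lia. simpl.
      apply saw_c; lra.
    + destruct (Nat.lt_ge_cases k k0) as [Kl|Kg].
      * rewrite (zs_mov s k), (zs_mov s (S k)) by lia.
        replace (pred (S k)) with (S (pred k)) by lia. simpl M at 2.
        replace (S (pred k)) with k by lia.
        destruct (G_step w0 Hb0 k ltac:(lia) ltac:(lia)) as [Es [Hcl [Hl1 [Hn1 _]]]].
        apply saw_Tb; try lra.
        -- replace k with (S (pred k)) at 1 by lia. apply C0a; auto; lia.
        -- intros He. replace (Tb (ecode k) (M (pred k) s)) with (zs s (S k))
             by (rewrite zs_mov by lia; replace (pred (S k)) with (S (pred k)) by lia; simpl;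
                 replace (S (pred k)) with k by lia; reflexivity).
           replace s with (zs s 1) at 2 by (rewrite zs_mov by lia; reflexivity).
           left. apply N3; auto; try lia.
           assert (L : zz w0 (S k) <= t0).
           { rewrite zz_S. unfold Sw. simpl. apply saw_le_w1; auto. destruct He as [He|He]; rewrite He in Hcl; simpl in Hcl; lra. }
           rewrite zz0_1. destruct L as [L|L]; auto. exfalso. assert (L' : zz w0 (S k) = zz w0 1) by (rewrite zz0_1; exact L). apply (G_dist1 w0 Hb0) in L'; lia.
        -- intros He. replace (Tb (ecode k) (M (pred k) s)) with (zs s (S k))
             by (rewrite zs_mov by lia; replace (pred (S k)) with (S (pred k)) by lia; simpl;
                 replace (S (pred k)) with k by lia; reflexivity).
           replace bt with (zs s (S k0)) at 1 by (rewrite zs_fix by lia; auto).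
           left. apply N3; auto; try lia.
           assert (L := G_right w0 Hb0 k (Hn1 He)).
           destruct L as [L|L]; auto. exfalso. apply (G_dist1 w0 Hb0) in L; lia.
      * destruct (Nat.eq_dec k k0) as [Ek|Ek].
        -- subst k. rewrite (zs_mov s k0) by lia. rewrite (zs_fix s (S k0)) by lia.
           rewrite Hbt. apply saw_plateau; try lra. apply HP.
        -- rewrite (zs_fix s k), (zs_fix s (S k)) by lia.
           destruct (G_step w0 Hb0 k ltac:(lia) Ek) as [Es [Hcl [Hl1 [Hn1 _]]]].
           rewrite zz_S, Es. apply saw_Tb; try lra; auto.
           ++ intros He. rewrite <- Es, <- zz_S.
              replace s with (zs s 1) by (rewrite zs_mov by lia; reflexivity).
              replace (zz w0 (S k)) with (zs s (S k)) by (apply zs_fix; lia).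
              left. apply N3; auto; try lia. rewrite zz0_1.
              assert (L : zz w0 (S k) <= t0).
              { rewrite zz_S. unfold Sw. simpl. apply saw_le_w1; auto. destruct He as [He|He]; rewrite He in Hcl; simpl in Hcl; lra. }
              destruct L as [L|L]; auto. exfalso. assert (L' : zz w0 (S k) = zz w0 1) by (rewrite zz0_1; exact L). apply (G_dist1 w0 Hb0) in L'; lia.
           ++ intros He. rewrite <- Es. unfold Sw. simpl. apply saw_ge_w2; auto.
              assert (H' := Hn1 He). lra.
Qed.

Lemma horiz_ok s : Pi s -> bone Minus p o (s, bt) /\ zz (s, bt) k0 = M (pred k0) s.
Proof.
  intros HP. assert (Hs1 := s_le1 s HP). assert (Hbs := bt_le_s s HP). destruct HT0 as [T1 [T2 T3]].
  assert (Hk0' := k0_pos). split.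
  - apply builder.
    + unfold inT; simpl; repeat split; lra.
    + rewrite (N4 s HP), zs_fix by lia. apply (G_per w0 Hb0).
    + intros k l Hk Hl H. rewrite !(N4 s HP) by lia. apply N3; auto; try lia. apply (G_ord w0 Hb0); auto.
  - rewrite (N4 s HP), zs_mov by lia. reflexivity.
Qed.


Lemma M_solve v : exists s, M (pred k0) s = v.
Proof.
  destruct (M_aff_nz (pred k0)) as [a1 [d [Hd H]]].
  exists ((v - a1)/d). rewrite H. field. auto.
Qed.

Lemma Pi_between A2 A3 s : M (pred k0) A2 = (2 - bt)/3 -> M (pred k0) A3 = (2 + bt)/3 ->
  (Pi s <-> (A2 <= s <= A3 \/ A3 <= s <= A2)).
Proof.
  intros E2 E3. destruct (M_aff_nz (pred k0)) as [a1 [d [Hd H]]].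
  unfold Pi. rewrite H in *. assert (Hb := bt_pos).
  destruct (Rlt_dec 0 d) as [D|D].
  - assert (A2 < A3) by nra. split.
    + intros [L U]. left. split; nra.
    + intros [[L U]|[L U]]; [split; nra| exfalso; lra].
  - assert (D' : d < 0) by lra. assert (A3 < A2) by nra. split.
    + intros [L U]. right. split; nra.
    + intros [[L U]|[L U]]; [exfalso; lra| split; nra].
Qed.

Lemma Vseg A : Pi A -> (M (pred k0) A = (2 - bt)/3 \/ M (pred k0) A = (2 + bt)/3) ->
  forall v, 0 <= v <= bt -> bone Minus p o (A, v).
Proof.
  intros HP HM v Hv.
  destruct (horiz_ok A HP) as [HbW HzW].
  assert (Hs1 := s_le1 A HP). assert (Hbs := bt_le_s A HP).
  assert (H1 := bt_lt1). assert (H2 := bt_pos).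
  assert (HS0 : Sw (A, bt) (zz (A, bt) k0) = bt).
  { rewrite HzW. unfold Sw; simpl. destruct HM as [E|E]; rewrite E.
    - apply saw_v2; lra.
    - apply saw_v3; lra. }
  apply (w2change (A, bt) (A, v) HbW); [unfold inT; simpl; repeat split; lra|].
  intros k Hk.
  destruct (Nat.eq_dec k 0) as [E0|E0].
  - subst k. rewrite zz_0. unfold Sw; simpl. rewrite !saw_c; lra.
  - destruct (Nat.eq_dec k k0) as [Ek|Ek].
    + subst k. rewrite HS0. rewrite HzW. unfold Sw; simpl. destruct HM as [E|E]; rewrite E.
      * apply saw_v2; lra.
      * apply saw_v3; lra.
    + destruct (G_step (A, bt) HbW k ltac:(lia) Ek) as [Es [Hcl [Hl1 [Hn1 _]]]].
      rewrite Es. unfold Sw in Es |- *. simpl in Es |- *.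
      apply saw_Tb; try lra; auto.
      * intros He. rewrite <- Es. apply saw_le_w1; try lra.
        destruct He as [He|He]; rewrite He in Hcl; simpl in Hcl; lra.
      * intros He. rewrite <- Es.
        assert (L := G_right (A, bt) HbW k (Hn1 He)). rewrite (zz_S _ k0), HS0, zz_S in L.
        unfold Sw in L; simpl in L. lra.
Qed.

Lemma fwdM w : bone Minus p o w -> forall k, (k < k0)%nat -> zz w (S k) = M k (fst w).
Proof.
  intros Hw. induction k; intros Hk.
  - apply (G_w1 w Hw).
  - rewrite zz_S, IHk by lia.
    destruct (G_step w Hw (S k) ltac:(lia) ltac:(lia)) as [Es _].
    rewrite <- IHk by lia. rewrite Es. rewrite IHk by lia. reflexivity.
Qed.

Definition cc (e : nat) (k : nat) : nat := if Nat.eqb k k0 then e else ecode k.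

Lemma main_sub A2 A3 : M (pred k0) A2 = (2 - bt)/3 -> M (pred k0) A3 = (2 + bt)/3 ->
  forall w, bone Minus p o w -> Ushape A2 A3 bt w.
Proof.
  intros E2 E3 w Hw.
  assert (H1 := bt_lt1). assert (H2 := bt_pos). assert (Hk0' := k0_pos).
  assert (HP2 : Pi A2) by (unfold Pi; rewrite E2; lra).
  assert (HP3 : Pi A3) by (unfold Pi; rewrite E3; lra).
  destruct (G_HT w Hw) as [W1 [W2 W3]].
  destruct (G_k0 w Hw) as [Hz13 [[Hle Es]|[[Hge Es]|[Es HPi']]]].
  -
    destruct (horiz_ok A2 HP2) as [HbW HzW].
    assert (Hb := bwd (zz w) (zz (A2, bt)) (cc 2) 1 p ltac:(lia)).
    assert (HSW : zz (A2,bt) (S k0) = bt).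
    { rewrite zz_S, HzW, E2. unfold Sw; simpl. apply saw_v2; try lra.
      assert (Hbs := bt_le_s A2 HP2). lra. assert (Hs := s_le1 A2 HP2). lra. }
    assert (Heq : forall k, (1 <= k <= p)%nat -> zz w k = zz (A2, bt) k).
    { apply Hb.
      - intros k Hk. unfold cc. destruct (Nat.eqb_spec k k0) as [Ek|Ek].
        + subst k. split.
          * rewrite zz_S, Es. reflexivity.
          * rewrite HSW, HzW, E2. simpl. lra.
        + split.
          * rewrite zz_S. apply (G_step w Hw k); lia.
          * rewrite zz_S. apply (G_step (A2, bt) HbW k); lia.
      - rewrite (G_per w Hw), (G_per _ HbW). auto. }
    left. split.
    + rewrite <- (G_w1 w Hw), Heq by lia. apply (G_w1 _ HbW).
    + split; auto. rewrite <- HSW, <- Heq by lia. rewrite zz_S.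
      unfold Sw. apply saw_ge_w2; lra.
  -
    destruct (horiz_ok A3 HP3) as [HbW HzW].
    assert (Hb := bwd (zz w) (zz (A3, bt)) (cc 3) 1 p ltac:(lia)).
    assert (HSW : zz (A3,bt) (S k0) = bt).
    { rewrite zz_S, HzW, E3. unfold Sw; simpl. apply saw_v3; try lra.
      assert (Hbs := bt_le_s A3 HP3). lra. assert (Hs := s_le1 A3 HP3). lra. }
    assert (Heq : forall k, (1 <= k <= p)%nat -> zz w k = zz (A3, bt) k).
    { apply Hb.
      - intros k Hk. unfold cc. destruct (Nat.eqb_spec k k0) as [Ek|Ek].
        + subst k. split.
          * rewrite zz_S, Es. reflexivity.
          * rewrite HSW, HzW, E3. simpl. lra.
        + split.
          * rewrite zz_S. apply (G_step w Hw k); lia.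
          * rewrite zz_S. apply (G_step (A3, bt) HbW k); lia.
      - rewrite (G_per w Hw), (G_per _ HbW). auto. }
    right; right. split.
    + rewrite <- (G_w1 w Hw), Heq by lia. apply (G_w1 _ HbW).
    + split; auto. rewrite <- HSW, <- Heq by lia. rewrite zz_S.
      unfold Sw. apply saw_ge_w2; lra.
  -
    assert (Hb := bwd (zz w) (zz w0) ecode (S k0) p ltac:(lia)).
    assert (Heq : forall k, (S k0 <= k <= p)%nat -> zz w k = zz w0 k).
    { apply Hb.
      - intros k Hk. split.
        + rewrite zz_S. apply (G_step w Hw k); lia.
        + rewrite zz_S. apply (G_step w0 Hb0 k); lia.
      - rewrite (G_per w Hw), (G_per _ Hb0). auto. }
    assert (Hsw : snd w = bt).
    { rewrite <- Es, <- zz_S, Heq by lia. auto. }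
    right; left. split; auto.
    apply (Pi_between A2 A3 (fst w) E2 E3). unfold Pi.
    rewrite <- fwdM by (auto; lia). rewrite k0S. rewrite <- Hsw. auto.
Qed.

Lemma horiz_main : exists A2 A3, A2 <> A3 /\ 0 < bt < 1 /\ oddT bt /\ oddT A2 /\ oddT A3 /\
  0 <= A2 < 1 /\ 0 <= A3 < 1 /\ (forall w, bone Minus p o w <-> Ushape A2 A3 bt w) /\
  (exists s, (A2 < s < A3 \/ A3 < s < A2) /\ bone Minus p o (s, bt) /\ zz (s, bt) k0 = 2/3).
Proof.
  assert (H1 := bt_lt1). assert (H2 := bt_pos). assert (Hk0' := k0_pos).
  destruct (M_solve ((2 - bt)/3)) as [A2 E2].
  destruct (M_solve ((2 + bt)/3)) as [A3 E3].
  assert (HP2 : Pi A2) by (unfold Pi; rewrite E2; lra).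
  assert (HP3 : Pi A3) by (unfold Pi; rewrite E3; lra).
  destruct (horiz_ok A2 HP2) as [HbW2 HzW2]. destruct (horiz_ok A3 HP3) as [HbW3 HzW3].
  exists A2, A3.
  assert (Hne : A2 <> A3) by (intro E; subst; lra).
  split; [auto|]. split; [lra|].
  split.
  {
    rewrite <- Hbt. apply (oddT_chain (zz w0) ecode (S k0) p); try lia.
    - intros k Hk. rewrite zz_S. apply (G_step w0 Hb0 k); lia.
    - rewrite (G_per w0 Hb0). apply oddT_c. }
  assert (Hodd : forall A, Pi A -> (M (pred k0) A = (2 - bt)/3 /\ cc 2 k0 = 2%nat \/
                    M (pred k0) A = (2 + bt)/3 /\ cc 3 k0 = 3%nat) -> oddT A).
  { intros A HP HM. destruct (horiz_ok A HP) as [HbW HzW].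
    assert (Hs1 := s_le1 A HP). assert (Hbs := bt_le_s A HP).
    change A with (fst (A, bt)) at 1. rewrite <- (G_w1 _ HbW).
    destruct HM as [[HM _]|[HM _]].
    - apply (oddT_chain (zz (A,bt)) (cc 2) 1 p); try lia.
      + intros k Hk. unfold cc. destruct (Nat.eqb_spec k k0) as [Ek|Ek].
        * subst k. rewrite zz_S, HzW, HM. unfold Sw; simpl. rewrite saw_v2 by lra. simpl. lra.
        * rewrite zz_S. apply (G_step _ HbW k); lia.
      + rewrite (G_per _ HbW). apply oddT_c.
    - apply (oddT_chain (zz (A,bt)) (cc 3) 1 p); try lia.
      + intros k Hk. unfold cc. destruct (Nat.eqb_spec k k0) as [Ek|Ek].
        * subst k. rewrite zz_S, HzW, HM. unfold Sw; simpl. rewrite saw_v3 by lra. simpl. lra.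
        * rewrite zz_S. apply (G_step _ HbW k); lia.
      + rewrite (G_per _ HbW). apply oddT_c. }
  split; [apply Hodd; auto; left; split; auto; unfold cc; rewrite Nat.eqb_refl; auto|].
  split; [apply Hodd; auto; right; split; auto; unfold cc; rewrite Nat.eqb_refl; auto|].
  split.
  { assert (Hs1 := s_le1 A2 HP2). assert (Hbs := bt_le_s A2 HP2). split; [lra|].
    apply (G_w1lt _ HbW2). }
  split.
  { assert (Hs1 := s_le1 A3 HP3). assert (Hbs := bt_le_s A3 HP3). split; [lra|].
    apply (G_w1lt _ HbW3). }
  split.
  - intros w. split.
    + apply main_sub; auto.
    + intros [[Ef Hv]|[[Es Hbw]|[Ef Hv]]].
      * rewrite (surjective_pairing w), Ef. apply (Vseg A2 HP2); auto.
      * rewrite (surjective_pairing w), Es. apply horiz_ok.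
        apply (Pi_between A2 A3 (fst w) E2 E3). auto.
      * rewrite (surjective_pairing w), Ef. apply (Vseg A3 HP3); auto.
  - destruct (M_solve (2/3)) as [s Es]. exists s.
    assert (HPs : Pi s) by (unfold Pi; rewrite Es; lra).
    destruct (horiz_ok s HPs) as [Hbs Hzs]. split; [|split; auto; rewrite Hzs; auto].
    destruct (proj1 (Pi_between A2 A3 s E2 E3) HPs) as [[L U]|[L U]].
    + left. split.
      * destruct L as [L|L]; auto. subst. lra.
      * destruct U as [U|U]; auto. subst. lra.
    + right. split.
      * destruct L as [L|L]; auto. subst. lra.
      * destruct U as [U|U]; auto. subst. lra.
Qed.

End Horiz.

Lemma core_in : (exists w, bone Minus p o w) ->
  exists A2 A3 b, A2 <> A3 /\ 0 < b < 1 /\ oddT b /\ oddT A2 /\ oddT A3 /\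
  0 <= A2 < 1 /\ 0 <= A3 < 1 /\ (forall w, bone Minus p o w <-> Ushape A2 A3 b w) /\
  (exists s, (A2 < s < A3 \/ A3 < s < A2) /\ bone Minus p o (s, b) /\
     (exists k, zz (s, b) k = 2/3) /\ zz (s, b) p = 1/3).
Proof.
  intros [w0 Hw0].
  set (bt := zz w0 (S k0)).
  assert (Hfin : forall t0, bone Minus p o (t0, bt) -> (2 - bt)/3 <= zz (t0,bt) k0 <= (2 + bt)/3 ->
     zz (t0, bt) (S k0) = bt -> exists A2 A3 b, A2 <> A3 /\ 0 < b < 1 /\ oddT b /\ oddT A2 /\ oddT A3 /\
  0 <= A2 < 1 /\ 0 <= A3 < 1 /\ (forall w, bone Minus p o w <-> Ushape A2 A3 b w) /\
  (exists s, (A2 < s < A3 \/ A3 < s < A2) /\ bone Minus p o (s, b) /\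
     (exists k, zz (s, b) k = 2/3) /\ zz (s, b) p = 1/3)).
  { intros t0 Hb0 HPi Hbt.
    destruct (horiz_main t0 bt Hb0 HPi Hbt) as [A2 [A3 [H1 [H2 [H3 [H4 [H5 [H6 [H7 [H8 [s [Hs1 [Hs2 Hs3]]]]]]]]]]]]].
    exists A2, A3, bt. repeat (split; auto).
    exists s. split; auto. split; auto. split; [exists k0; auto|]. apply (G_per _ Hs2). }
  destruct (G_HT w0 Hw0) as [T1 [T2 T3]].
  assert (Hblt := G_beta_lt w0 Hw0). fold bt in Hblt.
  assert (Hb0' : 0 <= bt) by apply (G_01 w0 Hw0).
  destruct (G_k0 w0 Hw0) as [Hz13 [[Hle Es]|[[Hge Es]|[Es HPi']]]].
  - assert (Ebt : bt = 2 - 3 * zz w0 k0) by (unfold bt; rewrite zz_S; auto).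
    destruct (w2change w0 (fst w0, bt) Hw0) as [Hb' Hz'].
    + unfold inT; simpl; repeat split; lra.
    + intros k Hk. unfold Sw; simpl.
      destruct (Nat.eq_dec k 0) as [E0|E0]. { subst k. rewrite zz_0, !saw_c; lra. }
      destruct (Nat.eq_dec k k0) as [Ek|Ek].
      * subst k. change (saw (fst w0) (snd w0) (zz w0 k0)) with (Sw w0 (zz w0 k0)). rewrite Es.
        apply saw_Tb with (e := 2%nat); simpl; try lra; intros; lra.
      * destruct (G_step w0 Hw0 k ltac:(lia) Ek) as [Es' [Hcl [Hl1 [Hn1 _]]]].
        change (saw (fst w0) (snd w0) (zz w0 k)) with (Sw w0 (zz w0 k)). rewrite Es'.
        apply saw_Tb; try lra; auto.
        -- intros He. rewrite <- Es'. unfold Sw. apply saw_le_w1; try lra.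
           destruct He as [He|He]; rewrite He in Hcl; simpl in Hcl; lra.
        -- intros He. rewrite <- Es', <- zz_S. apply (G_right w0 Hw0 k); auto.
    + apply (Hfin (fst w0)); [auto| rewrite Hz'; split; lra | rewrite Hz'; auto].
  - assert (Ebt : bt = 3 * zz w0 k0 - 2) by (unfold bt; rewrite zz_S; auto).
    assert (Hz1 := G_01 w0 Hw0 k0).
    destruct (w2change w0 (fst w0, bt) Hw0) as [Hb' Hz'].
    + unfold inT; simpl; repeat split; lra.
    + intros k Hk. unfold Sw; simpl.
      destruct (Nat.eq_dec k 0) as [E0|E0]. { subst k. rewrite zz_0, !saw_c; lra. }
      destruct (Nat.eq_dec k k0) as [Ek|Ek].
      * subst k. change (saw (fst w0) (snd w0) (zz w0 k0)) with (Sw w0 (zz w0 k0)). rewrite Es.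
        apply saw_Tb with (e := 3%nat); simpl; try lra; intros; try (destruct H as [H|H]; discriminate); lra.
      * destruct (G_step w0 Hw0 k ltac:(lia) Ek) as [Es' [Hcl [Hl1 [Hn1 _]]]].
        change (saw (fst w0) (snd w0) (zz w0 k)) with (Sw w0 (zz w0 k)). rewrite Es'.
        apply saw_Tb; try lra; auto.
        -- intros He. rewrite <- Es'. unfold Sw. apply saw_le_w1; try lra.
           destruct He as [He|He]; rewrite He in Hcl; simpl in Hcl; lra.
        -- intros He. rewrite <- Es', <- zz_S. apply (G_right w0 Hw0 k); auto.
    + apply (Hfin (fst w0)); [auto| rewrite Hz'; split; lra | rewrite Hz'; auto].
  - assert (Ebt : snd w0 = bt) by (unfold bt; rewrite zz_S; auto).
    apply (Hfin (fst w0)); rewrite <- Ebt, <- surjective_pairing; auto.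
Qed.

End Common.

Theorem core_minus p o : (2 <= p)%nat -> (forall i, (i < p)%nat -> (o i < p)%nat) ->
  (forall i j, (i < p)%nat -> (j < p)%nat -> o i = o j -> i = j) ->
  (exists w, bone Minus p o w) ->
  exists A2 A3 b, A2 <> A3 /\ 0 < b < 1 /\ oddT b /\ oddT A2 /\ oddT A3 /\
  0 <= A2 < 1 /\ 0 <= A3 < 1 /\ (forall w, bone Minus p o w <-> Ushape A2 A3 b w) /\
  (exists s, (A2 < s < A3 \/ A3 < s < A2) /\ bone Minus p o (s, b) /\
     (exists k, zz (s, b) k = 2/3) /\ zz (s, b) p = 1/3).
Proof.
  intros Hp Hr Hi [w0 Hw0].
  destruct (bone_x p o w0 Hw0) as [HT [x [a [Ha [Hxa [Hinc [Hsx Hrx]]]]]]].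
  assert (HD1 : forall i, (S i <= a)%nat -> (o i < o (S i))%nat) by (intros; eapply D1; eauto).
  assert (HD2 : (S a < p)%nat) by (eapply D2; eauto).
  assert (HD3 : (o (S a) < o a)%nat) by (eapply D3; eauto).
  destruct (argmin_ex o (S a) p HD2) as [mu [Hmu Hmin]].
  assert (Hreach : forall i, (i < p)%nat -> exists k, sg o a k = i) by (intros; eapply reach_sg; eauto).
  destruct (Hreach mu ltac:(lia)) as [k Hk].
  assert (Hk0 : sg o a (k mod p) = mu) by (rewrite <- (sg_mod p o Hr Hi a Ha Hreach); auto).
  assert (Hk0p : (k mod p < p)%nat) by (apply Nat.mod_upper_bound; lia).
  apply (core_in p o a mu (k mod p)); auto; try lia;
    try (intros i Hi'; apply Hmin; lia); try (exists w0; auto).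
Qed.

Open Scope R_scope.

Lemma cont_plus f g : continuity f -> continuity g -> continuity (fun x => f x + g x).
Proof. intros. exact (continuity_plus f g H H0). Qed.
Lemma cont_minus f g : continuity f -> continuity g -> continuity (fun x => f x - g x).
Proof. intros. exact (continuity_minus f g H H0). Qed.
Lemma cont_scal a f : continuity f -> continuity (fun x => a * f x).
Proof. intros. exact (continuity_scal f a H). Qed.
Lemma cont_const c : continuity (fun _ => c).
Proof. apply continuity_const. intros x y; reflexivity. Qed.
Lemma cont_lin a b : continuity (fun u => a * u + b).
Proof. apply derivable_continuous. reg. Qed.
Lemma cont_abs_lin a b : continuity (fun u => Rabs (a * u + b)).
Proof. exact (continuity_comp (fun u => a * u + b) Rabs (cont_lin a b) Rcontinuity_abs). Qed.

Definition clamp (v : R) := (Rabs v - Rabs (v - 1) + 1) / 2.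
Lemma clamp_lo v : v <= 0 -> clamp v = 0.
Proof. intros; unfold clamp, Rabs; repeat destruct Rcase_abs; lra. Qed.
Lemma clamp_mid v : 0 <= v <= 1 -> clamp v = v.
Proof. intros; unfold clamp, Rabs; repeat destruct Rcase_abs; lra. Qed.
Lemma clamp_hi v : 1 <= v -> clamp v = 1.
Proof. intros; unfold clamp, Rabs; repeat destruct Rcase_abs; lra. Qed.

Lemma cont_ext f g : (forall x, f x = g x) -> continuity f -> continuity g.
Proof.
  intros E H x. unfold continuity_pt, continue_in, limit1_in, limit_in in *. intros eps Heps.
  destruct (H x eps Heps) as [al [Hal Hf]]. exists al. split; auto. intros y Hy.
  rewrite <- !E. apply Hf; auto.
Qed.

Definition cl (c u : R) := clamp (3 * u - c).
Lemma cl_cont c : continuity (cl c).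
Proof.
  apply (cont_ext (fun u => / 2 * ((Rabs (3*u + -c) - Rabs (3*u + (-c - 1))) + 1))).
  - intro u. unfold cl, clamp, Rdiv.
    replace (3*u - c) with (3*u + -c) by ring. replace (3*u + -c - 1) with (3*u + (-c-1)) by ring. ring.
  - apply cont_scal. apply cont_plus; [|apply cont_const].
    apply cont_minus; apply cont_abs_lin.
Qed.

Lemma cl_lo c u : 3 * u <= c -> cl c u = 0.
Proof. intros; unfold cl; apply clamp_lo; lra. Qed.
Lemma cl_mid c u : c <= 3 * u <= c + 1 -> cl c u = 3 * u - c.
Proof. intros; unfold cl; apply clamp_mid; lra. Qed.
Lemma cl_hi c u : c + 1 <= 3 * u -> cl c u = 1.
Proof. intros; unfold cl; apply clamp_hi; lra. Qed.

Lemma cl_sum u : 0 <= u <= 1 -> cl 0 u + cl 1 u + cl 2 u = 3 * u.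
Proof.
  intros H. destruct (Rle_dec (3*u) 1); [|destruct (Rle_dec (3*u) 2)].
  - rewrite (cl_mid 0), (cl_lo 1), (cl_lo 2) by lra. ring.
  - rewrite (cl_hi 0), (cl_mid 1), (cl_lo 2) by lra. ring.
  - rewrite (cl_hi 0), (cl_hi 1), (cl_mid 2) by lra. ring.
Qed.
Lemma cl1_lt u : cl 1 u < 1 -> cl 2 u = 0.
Proof. intros H. destruct (Rle_dec (3*u) 2). apply cl_lo; lra. rewrite cl_hi in H; lra. Qed.
Lemma cl1_gt u : 0 < cl 1 u -> cl 0 u = 1.
Proof. intros H. destruct (Rle_dec 1 (3*u)). apply cl_hi; lra. rewrite cl_lo in H; lra. Qed.
Lemma cl_range c u : 0 <= cl c u <= 1.
Proof.
  destruct (Rle_dec (3*u) c); [rewrite cl_lo by lra; lra|].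
  destruct (Rle_dec (3*u) (c+1)); [rewrite cl_mid by lra; lra| rewrite cl_hi by lra; lra].
Qed.

Lemma canc x y d : d <> 0 -> x * d = y * d -> x = y.
Proof. intros Hd E. apply (Rmult_eq_reg_r d); auto. Qed.

Lemma inj_core s t D0 D1 D2 : 0 <= s <= 1 -> 0 <= t <= 1 -> D0 <> 0 -> D1 <> 0 -> D2 <> 0 ->
  cl 0 s * D0 + cl 2 s * D2 = cl 0 t * D0 + cl 2 t * D2 -> cl 1 s * D1 = cl 1 t * D1 -> s = t.
Proof.
  intros Hs Ht H0 H1 H2 E1 E2.
  apply canc in E2; auto.
  assert (R1 := cl_range 1 s).
  assert (Hsum : cl 0 s + cl 1 s + cl 2 s = cl 0 t + cl 1 t + cl 2 t).
  { destruct (Rlt_dec 0 (cl 1 s)) as [L|L].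
    - assert (cl 0 s = 1) by (apply cl1_gt; lra). assert (cl 0 t = 1) by (apply cl1_gt; lra).
      assert (cl 2 s = cl 2 t).
      { apply (canc _ _ D2); auto. rewrite H, H3 in E1. lra. }
      lra.
    - assert (cl 2 s = 0) by (apply cl1_lt; lra). assert (cl 2 t = 0) by (apply cl1_lt; lra).
      assert (cl 0 s = cl 0 t).
      { apply (canc _ _ D0); auto. rewrite H, H3 in E1. lra. }
      lra. }
  rewrite !cl_sum in Hsum by auto. lra.
Qed.

Definition gp (P : nat -> R * R) (k : R * R -> R) (u : R) : R :=
  k (P 0%nat) + cl 0 u * (k (P 1%nat) - k (P 0%nat)) + cl 1 u * (k (P 2%nat) - k (P 1%nat))
  + cl 2 u * (k (P 3%nat) - k (P 2%nat)).

Lemma gp_cont P k : continuity (gp P k).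
Proof.
  unfold gp.
  apply cont_plus; [apply cont_plus; [apply cont_plus|]|].
  - apply cont_const.
  - apply (cont_ext (fun u => (k (P 1%nat) - k (P 0%nat)) * cl 0 u)); [intro; ring|]. apply cont_scal, cl_cont.
  - apply (cont_ext (fun u => (k (P 2%nat) - k (P 1%nat)) * cl 1 u)); [intro; ring|]. apply cont_scal, cl_cont.
  - apply (cont_ext (fun u => (k (P 3%nat) - k (P 2%nat)) * cl 2 u)); [intro; ring|]. apply cont_scal, cl_cont.
Qed.

Lemma pair_eq (a b c d : R) : (a, b) = (c, d) <-> a = c /\ b = d.
Proof. split; [intro E; injection E; auto| intros [-> ->]; auto]. Qed.

Lemma gp_img P z : on_path P z <-> exists t, 0 <= t <= 1 /\ z = (gp P fst t, gp P snd t).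
Proof.
  destruct z as [z1 z2]. split.
  - intros [i [Hi [tau [Ht E]]]]. apply pair_eq in E. destruct E as [E1 E2].
    destruct i as [|[|[|]]]; try lia.
    + exists (tau / 3). split; [lra|]. apply pair_eq. unfold gp.
      rewrite (cl_mid 0), (cl_lo 1), (cl_lo 2) by lra. split; [rewrite E1|rewrite E2]; field.
    + exists ((1 + tau) / 3). split; [lra|]. apply pair_eq. unfold gp.
      rewrite (cl_hi 0), (cl_mid 1), (cl_lo 2) by lra. split; [rewrite E1|rewrite E2]; field.
    + exists ((2 + tau) / 3). split; [lra|]. apply pair_eq. unfold gp.
      rewrite (cl_hi 0), (cl_hi 1), (cl_mid 2) by lra. split; [rewrite E1|rewrite E2]; field.
  - intros [t [Ht E]]. apply pair_eq in E. destruct E as [E1 E2]. unfold gp in E1, E2.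
    destruct (Rle_dec (3*t) 1); [|destruct (Rle_dec (3*t) 2)].
    + rewrite (cl_mid 0), (cl_lo 1), (cl_lo 2) in E1, E2 by lra.
      exists 0%nat. split; [lia|]. exists (3*t). split; [lra|]. apply pair_eq; split; lra.
    + rewrite (cl_hi 0), (cl_mid 1), (cl_lo 2) in E1, E2 by lra.
      exists 1%nat. split; [lia|]. exists (3*t - 1). split; [lra|]. apply pair_eq; split; lra.
    + rewrite (cl_hi 0), (cl_hi 1), (cl_mid 2) in E1, E2 by lra.
      exists 2%nat. split; [lia|]. exists (3*t - 2). split; [lra|]. apply pair_eq; split; lra.
Qed.

Lemma neq_fst (P Q : R * R) : P <> Q -> snd P = snd Q -> fst P - fst Q <> 0.
Proof. destruct P, Q; simpl. intros H E D. apply H. f_equal; lra. Qed.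
Lemma neq_snd (P Q : R * R) : P <> Q -> fst P = fst Q -> snd P - snd Q <> 0.
Proof. destruct P, Q; simpl. intros H E D. apply H. f_equal; lra. Qed.

Lemma hv_simple_arc P : hv_path P -> simple_arc (on_path P) (P 0%nat) (P 3%nat).
Proof.
  intros [Hne Hhv].
  exists (gp P fst), (gp P snd). split; [|split; [|split; [|split]]].
  - intros t _. split; apply gp_cont.
  - intros s t Hs Ht E. apply pair_eq in E. destruct E as [E1 E2]. unfold gp in E1, E2.
    assert (N0 := Hne 0%nat ltac:(lia)). assert (N1 := Hne 1%nat ltac:(lia)).
    assert (N2 := Hne 2%nat ltac:(lia)).
    unfold horiz, vert in Hhv.
    destruct Hhv as [[A [B C]]|[A [B C]]].
    + assert (D0 := neq_fst _ _ (not_eq_sym N0) (eq_sym A)).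
      assert (D1 := neq_snd _ _ (not_eq_sym N1) (eq_sym B)).
      assert (D2 := neq_fst _ _ (not_eq_sym N2) (eq_sym C)).
      apply (inj_core s t _ _ _ Hs Ht D0 D1 D2).
      * assert (Z : fst (P 2%nat) - fst (P 1%nat) = 0) by lra. rewrite Z in E1. lra.
      * assert (Z0 : snd (P 1%nat) - snd (P 0%nat) = 0) by lra.
        assert (Z2 : snd (P 3%nat) - snd (P 2%nat) = 0) by lra. rewrite Z0, Z2 in E2. lra.
    + assert (D0 := neq_snd _ _ (not_eq_sym N0) (eq_sym A)).
      assert (D1 := neq_fst _ _ (not_eq_sym N1) (eq_sym B)).
      assert (D2 := neq_snd _ _ (not_eq_sym N2) (eq_sym C)).
      apply (inj_core s t _ _ _ Hs Ht D0 D1 D2).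
      * assert (Z : snd (P 2%nat) - snd (P 1%nat) = 0) by lra. rewrite Z in E2. lra.
      * assert (Z0 : fst (P 1%nat) - fst (P 0%nat) = 0) by lra.
        assert (Z2 : fst (P 3%nat) - fst (P 2%nat) = 0) by lra. rewrite Z0, Z2 in E1. lra.
  - intro z. apply gp_img.
  - unfold gp. rewrite (cl_mid 0), (cl_lo 1), (cl_lo 2) by lra.
    destruct (P 0%nat) as [u v]. simpl. f_equal; ring.
  - unfold gp. rewrite (cl_hi 0), (cl_hi 1), (cl_hi 2) by lra.
    destruct (P 3%nat) as [u v]. simpl. f_equal; ring.
Qed.

Lemma shape_arc B P : bone_shape B P -> simple_arc B (P 0%nat) (P 3%nat).
Proof.
  intros [Hhv HB]. destruct (hv_simple_arc P Hhv) as [g1 [g2 [C [I [Im [E0 E3]]]]]].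
  exists g1, g2. split; [auto|]. split; [auto|]. split; [|split; auto].
  intro z. rewrite HB. apply Im.
Qed.

Definition psi (w : R * R) : R * R := (1 - snd w, 1 - fst w).
Lemma psi_psi w : psi (psi w) = w.
Proof. destruct w; unfold psi; simpl; f_equal; ring. Qed.

Lemma seg_psi P Q z : seg (psi P) (psi Q) z <-> seg P Q (psi z).
Proof.
  destruct P as [p1 p2], Q as [q1 q2], z as [z1 z2]. unfold seg, psi; simpl.
  split; intros [t [Ht E]]; exists t; split; auto; apply pair_eq in E; apply pair_eq; lra.
Qed.

Lemma on_path_psi P z : on_path (fun i => psi (P i)) z <-> on_path P (psi z).
Proof.
  split; intros [i [Hi H]]; exists i; split; auto; apply seg_psi; auto.
Qed.

Lemma psi_inj w w' : psi w = psi w' -> w = w'.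
Proof. intros E. rewrite <- (psi_psi w), <- (psi_psi w'), E. auto. Qed.

Lemma hv_psi P : hv_path P -> hv_path (fun i => psi (P i)).
Proof.
  intros [Hne Hhv]. split.
  - intros i Hi E. apply (Hne i Hi). apply psi_inj; auto.
  - unfold horiz, vert, psi in *; simpl.
    destruct Hhv as [[A [B C]]|[A [B C]]]; [right|left]; repeat split; lra.
Qed.

Lemma shape_psi B P : bone_shape B P -> bone_shape (fun w => B (psi w)) (fun i => psi (P i)).
Proof.
  intros [Hhv HB]. split; [apply hv_psi; auto|].
  intro z. rewrite on_path_psi. apply HB.
Qed.

Definition PU (A2 A3 b : R) (i : nat) : R * R :=
  match i with 0%nat => (A2, 0) | 1%nat => (A2, b) | 2%nat => (A3, b) | _ => (A3, 0) end.

Definition Ushape' (A2 A3 b : R) (w : R*R) : Prop :=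
  (fst w = A2 /\ 0 <= snd w <= b) \/
  (snd w = b /\ (A2 <= fst w <= A3 \/ A3 <= fst w <= A2)) \/
  (fst w = A3 /\ 0 <= snd w <= b).

Lemma PU_hv A2 A3 b : A2 <> A3 -> 0 < b -> hv_path (PU A2 A3 b).
Proof.
  intros H Hb. split.
  - intros i Hi E. destruct i as [|[|[|]]]; simpl in E; try lia; apply pair_eq in E; lra.
  - right. unfold vert, horiz; simpl. auto.
Qed.

Lemma PU_path A2 A3 b w : A2 <> A3 -> 0 < b -> (Ushape' A2 A3 b w <-> on_path (PU A2 A3 b) w).
Proof.
  intros H Hb. destruct w as [w1 w2]. unfold Ushape', on_path, seg; simpl. split.
  - intros [[E [L U]]|[[E [[L U]|[L U]]]|[E [L U]]]].
    + exists 0%nat. split; [lia|]. exists (w2 / b). split.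
      * split; [apply Rmult_le_pos; [lra| left; apply Rinv_0_lt_compat; lra]|].
        apply (Rmult_le_reg_r b); auto. unfold Rdiv. rewrite Rmult_assoc, Rinv_l; lra.
      * simpl. apply pair_eq. split; [lra|]. field. lra.
    + exists 1%nat. split; [lia|]. exists ((w1 - A2) / (A3 - A2)).
      assert (A2 < A3) by lra. split.
      * split; [apply Rmult_le_pos; [lra| left; apply Rinv_0_lt_compat; lra]|].
        apply (Rmult_le_reg_r (A3 - A2)); [lra|]. unfold Rdiv. rewrite Rmult_assoc, Rinv_l; lra.
      * simpl. apply pair_eq. split; [field; lra| lra].
    + exists 1%nat. split; [lia|]. exists ((A2 - w1) / (A2 - A3)).
      assert (A3 < A2) by lra. split.
      * split; [apply Rmult_le_pos; [lra| left; apply Rinv_0_lt_compat; lra]|].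
        apply (Rmult_le_reg_r (A2 - A3)); [lra|]. unfold Rdiv. rewrite Rmult_assoc, Rinv_l; lra.
      * simpl. apply pair_eq. split; [field; lra| lra].
    + exists 2%nat. split; [lia|]. exists ((b - w2) / b). split.
      * split; [apply Rmult_le_pos; [lra| left; apply Rinv_0_lt_compat; lra]|].
        apply (Rmult_le_reg_r b); auto. unfold Rdiv. rewrite Rmult_assoc, Rinv_l; lra.
      * simpl. apply pair_eq. split; [lra|]. field. lra.
  - intros [i [Hi [t [Ht E]]]]. apply pair_eq in E. destruct E as [E1 E2].
    destruct i as [|[|[|]]]; simpl in E1, E2; try lia.
    + left. split; [lra|]. rewrite E2. split; nra.
    + right; left. split; [lra|].
      destruct (Rle_dec A2 A3); [left|right]; rewrite E1; split; nra.
    + right; right. split; [lra|]. rewrite E2. split; nra.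
Qed.

Open Scope R_scope.

Definition revo (p : nat) (o : nat -> nat) (i : nat) : nat := (p - 1 - o (p - 1 - i))%nat.

Lemma iter_conj g g' c n : (forall y, g' (1 - y) = 1 - g y) ->
  Nat.iter n g' (1 - c) = 1 - Nat.iter n g c.
Proof. intros H. induction n; simpl; auto. rewrite IHn. apply H. Qed.

Lemma pot_conj p o g g' c : (forall i, (i < p)%nat -> (o i < p)%nat) ->
  (forall y, g' (1 - y) = 1 - g y) ->
  periodic_order_type g c p o -> periodic_order_type g' (1 - c) p (revo p o).
Proof.
  intros Hr Hg [x [Hinc [Hit [Hre Hs]]]].
  exists (fun i => 1 - x (p - 1 - i)%nat). split; [|split; [|split]].
  - intros i j Hij Hj. assert (x (p - 1 - j)%nat < x (p - 1 - i)%nat) by (apply Hinc; lia). lra.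
  - intros k. destruct (Hit k) as [i [Hi E]]. exists (p - 1 - i)%nat. split; [lia|].
    rewrite (iter_conj g g' c k Hg). rewrite E. replace (p - 1 - (p - 1 - i))%nat with i by lia. auto.
  - intros i Hi. destruct (Hre (p - 1 - i)%nat ltac:(lia)) as [k E]. exists k.
    rewrite (iter_conj g g' c k Hg). rewrite E. auto.
  - intros i Hi. rewrite Hg, Hs by lia. unfold revo.
    specialize (Hr (p - 1 - i)%nat ltac:(lia)).
    replace (p - 1 - (p - 1 - o (p - 1 - i)%nat))%nat with (o (p - 1 - i)%nat) by lia. auto.
Qed.

Lemma pot_ext p o o' g c : (forall i, (i < p)%nat -> o i = o' i) ->
  periodic_order_type g c p o -> periodic_order_type g c p o'.
Proof.
  intros E [x [Hinc [Hit [Hre Hs]]]]. exists x. repeat split; auto.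
  intros i Hi. rewrite <- E; auto.
Qed.

Lemma revo_range p o : (forall i, (i < p)%nat -> (o i < p)%nat) ->
  forall i, (i < p)%nat -> (revo p o i < p)%nat.
Proof. intros H i Hi. unfold revo. lia. Qed.

Lemma revo_inj p o : (forall i, (i < p)%nat -> (o i < p)%nat) ->
  (forall i j, (i < p)%nat -> (j < p)%nat -> o i = o j -> i = j) ->
  forall i j, (i < p)%nat -> (j < p)%nat -> revo p o i = revo p o j -> i = j.
Proof.
  intros Hr Hi i j Hi' Hj E. unfold revo in E.
  assert (A := Hr (p - 1 - i)%nat ltac:(lia)). assert (B := Hr (p - 1 - j)%nat ltac:(lia)).
  assert (o (p - 1 - i)%nat = o (p - 1 - j)%nat) by lia.
  apply Hi in H; lia.
Qed.

Lemma revo_revo p o : (forall i, (i < p)%nat -> (o i < p)%nat) ->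
  forall i, (i < p)%nat -> revo p (revo p o) i = o i.
Proof.
  intros Hr i Hi. unfold revo. replace (p - 1 - (p - 1 - i))%nat with i by lia.
  specialize (Hr i Hi). lia.
Qed.

Lemma inT_psi w : inT w -> inT (psi w).
Proof. unfold inT, psi; simpl. lra. Qed.
Lemma inT_psi' w : inT (psi w) -> inT w.
Proof. unfold inT, psi; simpl. lra. Qed.

Lemma bone_plus_iff p o w : (forall i, (i < p)%nat -> (o i < p)%nat) ->
  (bone Plus p o w <-> bone Minus p (revo p o) (psi w)).
Proof.
  intros Hr. unfold bone. simpl. split.
  - intros [HT H]. split; [apply inT_psi; auto|].
    replace (1/3) with (1 - 2/3) by lra.
    apply (pot_conj p o (saw (fst w) (snd w))); auto.
    intro y. unfold psi; simpl. destruct HT as [A [B C]]. apply saw_conj; lra.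
  - intros [HT H]. split; [apply inT_psi'; auto|].
    assert (HT' := inT_psi' w HT).
    apply (pot_ext p (revo p (revo p o))); [apply revo_revo; auto|].
    replace (2/3) with (1 - 1/3) by lra.
    replace (saw (fst w) (snd w)) with (saw (1 - snd (psi w)) (1 - fst (psi w)))
      by (unfold psi; simpl; f_equal; ring).
    apply (pot_conj p (revo p o) (saw (fst (psi w)) (snd (psi w)))); auto.
    + apply revo_range; auto.
    + intro y. unfold psi in *; simpl in *. destruct HT' as [A [B C]]. apply saw_conj; lra.
Qed.

Open Scope R_scope.

Ltac orlra := first [ lra | split; orlra | left; orlra | right; orlra ].

Lemma div_lt1 x y : 0 < y -> x < y -> x / y < 1.
Proof.
  intros Hy H. apply (Rmult_lt_reg_r y); auto. unfold Rdiv. rewrite Rmult_assoc, Rinv_l.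
  - lra.
  - apply Rgt_not_eq; lra.
Qed.

Lemma open_v (P Q z : R * R) : fst P = fst z -> fst Q = fst z ->
  (snd P < snd z < snd Q \/ snd Q < snd z < snd P) -> open_seg P Q z.
Proof.
  destruct P as [p1 p2], Q as [q1 q2], z as [z1 z2]; simpl. intros E1 E2 H. subst p1 q1.
  exists ((z2 - p2) / (q2 - p2)). split.
  - destruct H as [[L U]|[L U]].
    + split; [apply Rdiv_lt_0_compat; lra|]. apply div_lt1; lra.
    + split.
      * replace ((z2 - p2) / (q2 - p2)) with ((p2 - z2) / (p2 - q2)) by (field; repeat split; intro; lra).
        apply Rdiv_lt_0_compat; lra.
      * replace ((z2 - p2) / (q2 - p2)) with ((p2 - z2) / (p2 - q2)) by (field; repeat split; intro; lra).
        apply div_lt1; lra.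
  - apply pair_eq. simpl. split; [ring|]. field. intro; destruct H; lra.
Qed.

Lemma open_h (P Q z : R * R) : snd P = snd z -> snd Q = snd z ->
  (fst P < fst z < fst Q \/ fst Q < fst z < fst P) -> open_seg P Q z.
Proof.
  destruct P as [p1 p2], Q as [q1 q2], z as [z1 z2]; simpl. intros E1 E2 H. subst p2 q2.
  exists ((z1 - p1) / (q1 - p1)). split.
  - destruct H as [[L U]|[L U]].
    + split; [apply Rdiv_lt_0_compat; lra|]. apply div_lt1; lra.
    + split.
      * replace ((z1 - p1) / (q1 - p1)) with ((p1 - z1) / (p1 - q1)) by (field; repeat split; intro; lra).
        apply Rdiv_lt_0_compat; lra.
      * replace ((z1 - p1) / (q1 - p1)) with ((p1 - z1) / (p1 - q1)) by (field; repeat split; intro; lra).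
        apply div_lt1; lra.
  - apply pair_eq. simpl. split; [|ring]. field. intro; destruct H; lra.
Qed.

Section Count.
Variables a1 a2 b d g1 g2 : R.
Hypothesis Ha : a1 < a2.
Hypothesis Ha1 : a2 < 1.
Hypothesis Hb : 0 < b.
Hypothesis Hg : g1 < g2.
Hypothesis Hg0 : 0 < g1.
Hypothesis Hd1 : d < 1.
Hypothesis N1 : a1 <> d.
Hypothesis N2 : a2 <> d.
Hypothesis N3 : g1 <> b.
Hypothesis N4 : g2 <> b.

Definition BB1 (q : R * R) := ((fst q = a1 \/ fst q = a2) /\ 0 <= snd q <= b) \/ (snd q = b /\ a1 <= fst q <= a2).
Definition BB2 (q : R * R) := ((snd q = g1 \/ snd q = g2) /\ d <= fst q <= 1) \/ (fst q = d /\ g1 <= snd q <= g2).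
Definition CP (q : R * R) :=
  (((fst q = a1 \/ fst q = a2) /\ 0 < snd q < b) /\ ((snd q = g1 \/ snd q = g2) /\ d < fst q < 1)) \/
  ((snd q = b /\ a1 < fst q < a2) /\ (fst q = d /\ g1 < snd q < g2)).

Ltac memb_dir1 :=
  let Hin := fresh "Hin" in
  intro Hin; repeat (destruct Hin as [Hin|Hin]; [apply pair_eq in Hin; destruct Hin as [<- <-]; simpl; split; orlra|]);
  destruct Hin.

Ltac memb_dir2 :=
  let A := fresh "A" in let B := fresh "B" in
  intros [A B];
  destruct A as [[[A|A] [? ?]]|[A [? ?]]]; destruct B as [[[B|B] [? ?]]|[B [? ?]]];
  subst; try (exfalso; lra);
  repeat (first [ left; apply pair_eq; split; lra | right ]); try (exfalso; lra).

Ltac memb :=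
  let q := fresh "q" in let x := fresh "x" in let y := fresh "y" in
  intro q; destruct q as [x y]; unfold BB1, BB2; simpl; split; [memb_dir1 | memb_dir2].

Ltac cpt :=
  let q := fresh "q" in let Hin := fresh "Hin" in
  intros q Hin; simpl in Hin; unfold CP;
  repeat (destruct Hin as [Hin|Hin]; [subst q; simpl; orlra|]); destruct Hin.

Ltac nodup :=
  repeat (constructor; [simpl; let H := fresh in intro H;
     repeat (destruct H as [H|H]; [apply pair_eq in H; lra|]); exact H|]).

Lemma count : exists (l : list (R * R)) (n : nat),
  (n = 0%nat \/ n = 2%nat \/ n = 4%nat) /\ NoDup l /\ length l = n /\
  (forall q, In q l <-> BB1 q /\ BB2 q) /\ (forall q, In q l -> CP q) /\
  ((a1 < d < a2 /\ g1 < b < g2) -> n = 2%nat).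
Proof.
  assert (Hd : d < a1 \/ a1 < d < a2 \/ a2 < d) by (destruct (Rlt_dec d a1); destruct (Rlt_dec d a2); lra).
  assert (Hbb : b < g1 \/ g1 < b < g2 \/ g2 < b) by (destruct (Rlt_dec b g1); destruct (Rlt_dec b g2); lra).
  destruct Hd as [Hd|[Hd|Hd]]; destruct Hbb as [Hbb|[Hbb|Hbb]].
  - exists nil, 0%nat. split; [auto|]. split; [constructor|]. split; [auto|].
    split; [memb|]. split; [intros q []| intros; lra].
  - exists ((a1,g1)::(a2,g1)::nil), 2%nat. split; [auto|]. split; [nodup; constructor|]. split; [auto|].
    split; [memb|]. split; [cpt|intros; lra].
  - exists ((a1,g1)::(a1,g2)::(a2,g1)::(a2,g2)::nil), 4%nat. split; [auto|]. split; [nodup; constructor|]. split; [auto|].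
    split; [memb|]. split; [cpt|intros; lra].
  - exists nil, 0%nat. split; [auto|]. split; [constructor|]. split; [auto|].
    split; [memb|]. split; [intros q []| intros; lra].
  - exists ((a2,g1)::(d,b)::nil), 2%nat. split; [auto|]. split; [nodup; constructor|]. split; [auto|].
    split; [memb|]. split; [cpt|intros; auto].
  - exists ((a2,g1)::(a2,g2)::nil), 2%nat. split; [auto|]. split; [nodup; constructor|]. split; [auto|].
    split; [memb|]. split; [cpt|intros; lra].
  - exists nil, 0%nat. split; [auto|]. split; [constructor|]. split; [auto|].
    split; [memb|]. split; [intros q []| intros; lra].
  - exists nil, 0%nat. split; [auto|]. split; [constructor|]. split; [auto|].
    split; [memb|]. split; [intros q []| intros; lra].
  - exists nil, 0%nat. split; [auto|]. split; [constructor|]. split; [auto|].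
    split; [memb|]. split; [intros q []| intros; lra].
Qed.

End Count.

Open Scope R_scope.

Lemma iter_add_R (g : R -> R) a b c : Nat.iter (a + b) g c = Nat.iter a g (Nat.iter b g c).
Proof. induction a; simpl; auto. rewrite IHa; auto. Qed.

Lemma pot_shift g c d p o k : (1 <= p)%nat -> periodic_order_type g c p o ->
  Nat.iter k g c = d -> Nat.iter p g c = c -> periodic_order_type g d p o.
Proof.
  intros Hp [x [Hinc [Hit [Hre Hs]]]] Hk Hper.
  assert (Hpk : forall n q, Nat.iter (n + p * q) g c = Nat.iter n g c).
  { intros n q. induction q.
    - f_equal; lia.
    - replace (n + p * S q)%nat with (n + p * q + p)%nat by lia.
      rewrite iter_add_R, Hper. auto. }
  exists x. split; [auto|]. split; [|split; [|auto]].
  - intros m. destruct (Hit (m + k)%nat) as [i [Hi E]]. exists i. split; auto.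
    rewrite <- Hk, <- iter_add_R. auto.
  - intros i Hi. destruct (Hre i Hi) as [n E]. exists (n + (p - 1) * k)%nat.
    rewrite <- Hk, <- iter_add_R. replace (n + (p - 1) * k + k)%nat with (n + p * k)%nat by nia.
    rewrite Hpk. auto.
Qed.

Lemma shape_ext (B B' : R * R -> Prop) P : (forall w, B w <-> B' w) -> bone_shape B P -> bone_shape B' P.
Proof. intros E [H1 H2]. split; auto. intro z. rewrite <- E. apply H2. Qed.

Lemma cyc_r p o : is_cyclic_perm p o -> forall i, (i < p)%nat -> (o i < p)%nat.
Proof. intros [A _]; auto. Qed.
Lemma cyc_i p o : is_cyclic_perm p o -> forall i j, (i < p)%nat -> (j < p)%nat -> o i = o j -> i = j.
Proof. intros [_ [B _]]; auto. Qed.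

Lemma minus_shape p o : (2 <= p)%nat -> (forall i, (i < p)%nat -> (o i < p)%nat) ->
  (forall i j, (i < p)%nat -> (j < p)%nat -> o i = o j -> i = j) ->
  (exists w, bone Minus p o w) ->
  exists A2 A3 b, A2 <> A3 /\ 0 < b < 1 /\ oddT b /\ oddT A2 /\ oddT A3 /\
  0 <= A2 < 1 /\ 0 <= A3 < 1 /\ (forall w, bone Minus p o w <-> Ushape A2 A3 b w) /\
  bone_shape (bone Minus p o) (PU A2 A3 b) /\
  (exists s, (A2 < s < A3 \/ A3 < s < A2) /\ bone Minus p o (s, b) /\
     (exists k, zz (s, b) k = 2/3) /\ zz (s, b) p = 1/3).
Proof.
  intros Hp Hr Hi Hne.
  destruct (core_minus p o Hp Hr Hi Hne) as [A2 [A3 [b [H1 [H2 [H3 [H4 [H5 [H6 [H7 [H8 H9]]]]]]]]]]].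
  exists A2, A3, b.
  refine (conj H1 (conj H2 (conj H3 (conj H4 (conj H5 (conj H6 (conj H7 (conj H8 (conj _ H9))))))))).
  split; [apply PU_hv; lra|]. intro z. rewrite H8. apply PU_path; lra.
Qed.

Definition Qp (A2 A3 b : R) (i : nat) : R * R := psi (PU A2 A3 b i).

Lemma plus_shape p o : (2 <= p)%nat -> (forall i, (i < p)%nat -> (o i < p)%nat) ->
  (forall i j, (i < p)%nat -> (j < p)%nat -> o i = o j -> i = j) ->
  (exists w, bone Plus p o w) ->
  exists A2 A3 b, A2 <> A3 /\ 0 < b < 1 /\ oddT b /\ oddT A2 /\ oddT A3 /\
  0 <= A2 < 1 /\ 0 <= A3 < 1 /\ (forall w, bone Plus p o w <-> Ushape A2 A3 b (psi w)) /\
  bone_shape (bone Plus p o) (Qp A2 A3 b).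
Proof.
  intros Hp Hr Hi [w Hw].
  assert (Hr' := revo_range p o Hr). assert (Hi' := revo_inj p o Hr Hi).
  assert (Hne : exists w, bone Minus p (revo p o) w).
  { exists (psi w). apply bone_plus_iff; auto. }
  destruct (minus_shape p (revo p o) Hp Hr' Hi' Hne) as [A2 [A3 [b [H1 [H2 [H3 [H4 [H5 [H6 [H7 [H8 [H9 _]]]]]]]]]]]].
  exists A2, A3, b.
  refine (conj H1 (conj H2 (conj H3 (conj H4 (conj H5 (conj H6 (conj H7 (conj _ _)))))))).
  - intro w'. rewrite bone_plus_iff by auto. apply H8.
  - apply (shape_ext (fun w => bone Minus p (revo p o) (psi w))).
    + intro w'. rewrite bone_plus_iff by auto. tauto.
    + apply (shape_psi (bone Minus p (revo p o)) (PU A2 A3 b)). auto.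
Qed.

Lemma B1_iff A2 A3 b q : A2 <> A3 ->
  (Ushape A2 A3 b q <-> BB1 (Rmin A2 A3) (Rmax A2 A3) b q).
Proof.
  intros H. destruct q as [x y]. unfold Ushape, BB1, Rmin, Rmax; simpl.
  destruct (Rle_dec A2 A3); split; intros;
  repeat match goal with H : _ \/ _ |- _ => destruct H | H : _ /\ _ |- _ => destruct H end;
  orlra.
Qed.

Lemma B2_iff A2 A3 b q : A2 <> A3 ->
  (Ushape A2 A3 b (psi q) <-> BB2 (1 - b) (1 - Rmax A2 A3) (1 - Rmin A2 A3) q).
Proof.
  intros H. destruct q as [x y]. unfold Ushape, BB2, psi, Rmin, Rmax; simpl.
  destruct (Rle_dec A2 A3); split; intros;
  repeat match goal with H : _ \/ _ |- _ => destruct H | H : _ /\ _ |- _ => destruct H end;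
  orlra.
Qed.

Lemma trans_link A2 A3 b A2' A3' b' q : A2 <> A3 -> A2' <> A3' -> 0 < b -> 0 < b' ->
  CP (Rmin A2 A3) (Rmax A2 A3) b (1 - b') (1 - Rmax A2' A3') (1 - Rmin A2' A3') q ->
  transversal_crossing (PU A2 A3 b) (Qp A2' A3' b') q.
Proof.
  intros N N' Hb Hb'. destruct q as [x y]. unfold CP, Rmin, Rmax; simpl.
  destruct (Rle_dec A2 A3); destruct (Rle_dec A2' A3');
  (intros [[[Hx Hy] [Hy' Hx']]|[[Hy Hx] [Hx' Hy']]];
  [ assert (Hi : exists i, (i = 0 \/ i = 2)%nat /\ open_seg (PU A2 A3 b i) (PU A2 A3 b (S i)) (x, y));
    [ destruct (Req_dec x A2) as [E|E];
      [ exists 0%nat; split; auto; apply open_v; simpl; orlra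
      | exists 2%nat; split; auto; apply open_v; simpl; orlra ]
    | assert (Hj : exists j, (j = 0 \/ j = 2)%nat /\ open_seg (Qp A2' A3' b' j) (Qp A2' A3' b' (S j)) (x, y));
      [ destruct (Req_dec y (1 - A2')) as [E|E];
        [ exists 0%nat; split; auto; unfold Qp, psi; apply open_h; simpl; orlra
        | exists 2%nat; split; auto; unfold Qp, psi; apply open_h; simpl; orlra ]
      | destruct Hi as [i [Hi Oi]]; destruct Hj as [j [Hj Oj]];
        exists i, j; split; [lia|]; split; [lia|]; split; [auto|]; split; [auto|];
        unfold horiz, vert, Qp, psi;
        destruct Hi as [->| ->]; destruct Hj as [->| ->]; simpl; split; intro; lra ] ]
  | exists 1%nat, 1%nat; split; [lia|]; split; [lia|];
    split; [|split];
    [ apply open_h; simpl; orlra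
    | unfold Qp, psi; apply open_v; simpl; orlra
    | unfold horiz, vert, Qp, psi; simpl; split; intro; lra ] ]).
Qed.

Lemma oddT_ne_even x y : oddT x -> oddT y -> x <> 1 - y.
Proof. intros Hx Hy. apply oddT_evenT_ne; auto. apply oddT_evenT; auto. Qed.

Lemma Rmin_cases a b : Rmin a b = a \/ Rmin a b = b.
Proof. unfold Rmin; destruct (Rle_dec a b); auto. Qed.
Lemma Rmax_cases a b : Rmax a b = a \/ Rmax a b = b.
Proof. unfold Rmax; destruct (Rle_dec a b); auto. Qed.

Lemma inter_gen (Bm Bp : R * R -> Prop) A2 A3 b A2' A3' b' :
  A2 <> A3 -> 0 < b < 1 -> oddT b -> oddT A2 -> oddT A3 -> 0 <= A2 < 1 -> 0 <= A3 < 1 ->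
  (forall w, Bm w <-> Ushape A2 A3 b w) ->
  A2' <> A3' -> 0 < b' < 1 -> oddT b' -> oddT A2' -> oddT A3' -> 0 <= A2' < 1 -> 0 <= A3' < 1 ->
  (forall w, Bp w <-> Ushape A2' A3' b' (psi w)) ->
  exists n, (n = 0%nat \/ n = 2%nat \/ n = 4%nat) /\
    meet_transversally_in Bm Bp (PU A2 A3 b) (Qp A2' A3' b') n /\
    ((Rmin A2 A3 < 1 - b' < Rmax A2 A3 /\ 1 - Rmax A2' A3' < b < 1 - Rmin A2' A3') -> n = 2%nat).
Proof.
  intros N Hb Ob O2 O3 R2 R3 HBm N' Hb' Ob' O2' O3' R2' R3' HBp.
  assert (Hmm : Rmin A2 A3 < Rmax A2 A3) by (unfold Rmin, Rmax; destruct (Rle_dec A2 A3); lra).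
  assert (Hmm' : Rmin A2' A3' < Rmax A2' A3') by (unfold Rmin, Rmax; destruct (Rle_dec A2' A3'); lra).
  assert (Hmx : Rmax A2 A3 < 1) by (unfold Rmax; destruct (Rle_dec A2 A3); lra).
  assert (Hmx' : Rmax A2' A3' < 1) by (unfold Rmax; destruct (Rle_dec A2' A3'); lra).
  assert (Oa : forall a, a = A2 \/ a = A3 -> oddT a) by (intros a [->| ->]; auto).
  assert (Oa' : forall a, a = A2' \/ a = A3' -> oddT a) by (intros a [->| ->]; auto).
  destruct (count (Rmin A2 A3) (Rmax A2 A3) b (1 - b') (1 - Rmax A2' A3') (1 - Rmin A2' A3'))
    as [l [n [Hn [Hnd [Hl [Hmem [Hcp Hdual]]]]]]]; try lra.
  - apply oddT_ne_even; auto. apply Oa. apply Rmin_cases.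
  - apply oddT_ne_even; auto. apply Oa. apply Rmax_cases.
  - intro E. apply (oddT_ne_even b (Rmax A2' A3')); auto. apply Oa'. apply Rmax_cases.
  - intro E. apply (oddT_ne_even b (Rmin A2' A3')); auto. apply Oa'. apply Rmin_cases.
  - exists n. split; auto. split; auto.
    exists l. split; auto. split; auto. split.
    + intro q. rewrite Hmem, HBm, HBp, B1_iff, B2_iff by auto. tauto.
    + intros q Hq. apply trans_link; auto; try lra.
Qed.

Theorem lemma3_proof :
  (forall (s : sign) (p : nat) (o : nat -> nat),
     (2 <= p)%nat -> is_cyclic_perm p o -> (exists w, bone s p o w) ->
     exists P : nat -> R * R,
       bone_shape (bone s p o) P /\
       simple_arc (bone s p o) (P 0%nat) (P 3%nat) /\
       exists e : edge, on_edge e (P 0%nat) /\ on_edge e (P 3%nat)) /\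
  (forall (p : nat) (o : nat -> nat) (p' : nat) (o' : nat -> nat),
     (2 <= p)%nat -> is_cyclic_perm p o -> (exists w, bone Minus p o w) ->
     (2 <= p')%nat -> is_cyclic_perm p' o' -> (exists w, bone Plus p' o' w) ->
     exists (P Q : nat -> R * R) (n : nat),
       bone_shape (bone Minus p o) P /\ bone_shape (bone Plus p' o') Q /\
       (n = 0%nat \/ n = 2%nat \/ n = 4%nat) /\
       meet_transversally_in (bone Minus p o) (bone Plus p' o') P Q n) /\
  (forall (p : nat) (o : nat -> nat),
     (2 <= p)%nat -> is_cyclic_perm p o ->
     (exists w, bone Minus p o w) -> (exists w, bone Plus p o w) ->
     exists P Q : nat -> R * R,
       bone_shape (bone Minus p o) P /\ bone_shape (bone Plus p o) Q /\
       meet_transversally_in (bone Minus p o) (bone Plus p o) P Q 2%nat).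
Proof.
  split; [|split].
  - intros s p o Hp Hc Hne. assert (Hr := cyc_r p o Hc). assert (Hi := cyc_i p o Hc).
    destruct s.
    + destruct (minus_shape p o Hp Hr Hi Hne) as [A2 [A3 [b [H1 [H2 [H3 [H4 [H5 [H6 [H7 [H8 [H9 _]]]]]]]]]]]].
      exists (PU A2 A3 b). split; [auto|]. split; [apply shape_arc; auto|].
      exists E_w2_eq_0. simpl. split; split; auto; lra.
    + destruct (plus_shape p o Hp Hr Hi Hne) as [A2 [A3 [b [H1 [H2 [H3 [H4 [H5 [H6 [H7 [H8 H9]]]]]]]]]]].
      exists (Qp A2 A3 b). split; [auto|]. split; [apply shape_arc; auto|].
      exists E_w1_eq_1. unfold Qp, psi. simpl. split; split; try lra.
  - intros p o p' o' Hp Hc Hne Hp' Hc' Hne'.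
    assert (Hr := cyc_r p o Hc). assert (Hi := cyc_i p o Hc).
    assert (Hr' := cyc_r p' o' Hc'). assert (Hi' := cyc_i p' o' Hc').
    destruct (minus_shape p o Hp Hr Hi Hne) as [A2 [A3 [b [H1 [H2 [H3 [H4 [H5 [H6 [H7 [H8 [H9 _]]]]]]]]]]]].
    destruct (plus_shape p' o' Hp' Hr' Hi' Hne') as [A2' [A3' [b' [K1 [K2 [K3 [K4 [K5 [K6 [K7 [K8 K9]]]]]]]]]]].
    destruct (inter_gen (bone Minus p o) (bone Plus p' o') A2 A3 b A2' A3' b') as [n [Hn [Hm _]]]; auto.
    exists (PU A2 A3 b), (Qp A2' A3' b'), n. auto.
  - intros p o Hp Hc Hne Hne'.
    assert (Hr := cyc_r p o Hc). assert (Hi := cyc_i p o Hc).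
    destruct (minus_shape p o Hp Hr Hi Hne) as [A2 [A3 [b [H1 [H2 [H3 [H4 [H5 [H6 [H7 [H8 [H9 Hs]]]]]]]]]]]].
    destruct (plus_shape p o Hp Hr Hi Hne') as [A2' [A3' [b' [K1 [K2 [K3 [K4 [K5 [K6 [K7 [K8 K9]]]]]]]]]]].
    destruct (inter_gen (bone Minus p o) (bone Plus p o) A2 A3 b A2' A3' b') as [n [Hn [Hm Hd]]]; auto.
    exists (PU A2 A3 b), (Qp A2' A3' b'). split; [auto|]. split; [auto|].
    replace 2%nat with n; auto. apply Hd.
    destruct Hs as [s [Hbet [Hbs [[k Hk] Hper]]]].
    assert (HbP : bone Plus p o (s, b)).
    { destruct Hbs as [HT Hpot]. split; auto. simpl.
      apply (pot_shift _ (1/3) _ p o k); [lia| exact Hpot| exact Hk| exact Hper]. }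
    apply K8 in HbP. apply (B2_iff A2' A3' b' (s, b) K1) in HbP.
    unfold BB2 in HbP; simpl in HbP.
    assert (Oa' : forall a, a = A2' \/ a = A3' -> oddT a) by (intros a [->| ->]; auto).
    assert (G1 : 1 - Rmax A2' A3' <> b).
    { intro E. apply (oddT_ne_even b (Rmax A2' A3')); auto. apply Oa'. apply Rmax_cases. }
    assert (G2 : 1 - Rmin A2' A3' <> b).
    { intro E. apply (oddT_ne_even b (Rmin A2' A3')); auto. apply Oa'. apply Rmin_cases. }
    destruct HbP as [[[E|E] _]|[E [L U]]]; [exfalso; auto| exfalso; auto|].
    split.
    + rewrite <- E. unfold Rmin, Rmax. destruct (Rle_dec A2 A3); lra.
    + split; [destruct L as [L|L]; auto; exfalso; auto| destruct U as [U|U]; auto; exfalso; auto].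
Qed.

Theorem lemma3 :
  (* each non-empty bone of period p >= 2 *)
  (forall (s : sign) (p : nat) (o : nat -> nat),
     (2 <= p)%nat -> is_cyclic_perm p o -> (exists w, bone s p o w) ->
     exists P : nat -> R * R,
       bone_shape (bone s p o) P /\
       simple_arc (bone s p o) (P 0%nat) (P 3%nat) /\
       exists e : edge, on_edge e (P 0%nat) /\ on_edge e (P 3%nat)) /\
  (* any pair B_-(o), B_+(o') *)
  (forall (p : nat) (o : nat -> nat) (p' : nat) (o' : nat -> nat),
     (2 <= p)%nat -> is_cyclic_perm p o -> (exists w, bone Minus p o w) ->
     (2 <= p')%nat -> is_cyclic_perm p' o' -> (exists w, bone Plus p' o' w) ->
     exists (P Q : nat -> R * R) (n : nat),
       bone_shape (bone Minus p o) P /\ bone_shape (bone Plus p' o') Q /\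
       (n = 0%nat \/ n = 2%nat \/ n = 4%nat) /\
       meet_transversally_in (bone Minus p o) (bone Plus p' o') P Q n) /\
  (* dual bones *)
  (forall (p : nat) (o : nat -> nat),
     (2 <= p)%nat -> is_cyclic_perm p o ->
     (exists w, bone Minus p o w) -> (exists w, bone Plus p o w) ->
     exists P Q : nat -> R * R,
       bone_shape (bone Minus p o) P /\ bone_shape (bone Plus p o) Q /\
       meet_transversally_in (bone Minus p o) (bone Plus p o) P Q 2%nat).
Proof. exact lemma3_proof. Qed.
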